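(* For integers $a_1,a_2,D$ with $D\neq0$, $\varepsilon>0$ and $z$ in the complex upper half-plane, set \[\sigma_\varepsilon(z;a_1,a_2,D)=\sum_{\substack{(m,n)\in\mathbf{Z}^2\\ a_1+Dm\neq0}}\frac{1}{(z(a_1+Dm)+a_2+Dn)^2\,|z(a_1+Dm)+a_2+Dn|^{2\varepsilon}}.\] Then $\lim_{\mathrm{Im}(z)\to\infty}\lim_{\varepsilon\to0^+}\sigma_\varepsilon(z;a_1,a_2,D)=0$. *)

(* Defs.v *)
From Stdlib Require Import Reals ZArith.
From Coquelicot Require Import Coquelicot.
Open Scope R_scope.

Definition lat_pt (z : C) (a1 a2 D m n : Z) : C :=
  Cplus (Cmult z (RtoC (IZR (a1 + D * m)))) (RtoC (IZR (a2 + D * n))).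

Definition sigma_term (eps : R) (z : C) (a1 a2 D m n : Z) : C :=
  if Z.eq_dec (a1 + D * m) 0 then RtoC 0
  else let w := lat_pt z a1 a2 D m n in
       Cinv (Cmult (Cmult w w) (RtoC (Rpower (Cmod w) (2 * eps)))).

(* partial sum over the square -N <= m, n <= N *)
Definition sigma_partial (eps : R) (z : C) (a1 a2 D : Z) (N : nat) : C :=
  sum_n (fun i =>
    sum_n (fun j =>
      sigma_term eps z a1 a2 D (Z.of_nat i - Z.of_nat N)%Z
                                (Z.of_nat j - Z.of_nat N)%Z) (2 * N))
    (2 * N).

(* sigma_eps(z; a1, a2, D): sum over Z^2 (absolutely convergent for eps > 0),
   computed as the limit of the square partial sums, componentwise. *)
Definition sigma_eps (eps : R) (z : C) (a1 a2 D : Z) : C :=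
  (real (Lim_seq (fun N => Re (sigma_partial eps z a1 a2 D N))),
   real (Lim_seq (fun N => Im (sigma_partial eps z a1 a2 D N)))).

Definition Im_to_infty : (C -> Prop) -> Prop :=
  fun P => exists M : R, forall z : C, M < Im z -> P z.

(* Main.v *)
Require Import Defs.
From Stdlib Require Import Reals ZArith Lra Lia.
From Coquelicot Require Import Coquelicot.
Open Scope R_scope.

Fixpoint zs (N : nat) (f : Z -> R) : R :=
  match N with
  | O => f 0%Z
  | S k => zs k f + f (Z.of_nat (S k)) + f (- Z.of_nat (S k))%Z
  end.

Lemma zs_ext N f g : (forall k, (- Z.of_nat N <= k <= Z.of_nat N)%Z -> f k = g k) ->
  zs N f = zs N g.
Proof.
  induction N; intros H; cbn [zs].
  - apply H; lia.
  - rewrite IHN by (intros; apply H; lia). rewrite (H (Z.of_nat (S N))) by lia.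
    rewrite (H (- Z.of_nat (S N))%Z) by lia. reflexivity.
Qed.

Lemma zs_plus N f g : zs N (fun k => f k + g k) = zs N f + zs N g.
Proof. induction N; simpl; try rewrite IHN; ring. Qed.

Lemma zs_scal N a f : zs N (fun k => a * f k) = a * zs N f.
Proof. induction N; simpl; try rewrite IHN; ring. Qed.

Lemma zs_minus N f g : zs N (fun k => f k - g k) = zs N f - zs N g.
Proof. induction N; simpl; try rewrite IHN; ring. Qed.

Lemma zs_zero N : zs N (fun _ => 0) = 0.
Proof. induction N; simpl; try rewrite IHN; ring. Qed.

Lemma zs_le N f g : (forall k, (- Z.of_nat N <= k <= Z.of_nat N)%Z -> f k <= g k) ->
  zs N f <= zs N g.
Proof.
  induction N; intros H; cbn [zs].
  - apply H; lia.
  - assert (zs N f <= zs N g) by (apply IHN; intros; apply H; lia).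
    assert (f (Z.of_nat (S N)) <= g (Z.of_nat (S N))) by (apply H; lia).
    assert (f (- Z.of_nat (S N))%Z <= g (- Z.of_nat (S N))%Z) by (apply H; lia).
    lra.
Qed.

Lemma zs_nonneg N f : (forall k, 0 <= f k) -> 0 <= zs N f.
Proof.
  intros H. rewrite <- (zs_zero N). apply zs_le. intros; apply H.
Qed.

Lemma zs_abs N f : Rabs (zs N f) <= zs N (fun k => Rabs (f k)).
Proof.
  induction N; cbn [zs].
  - lra.
  - eapply Rle_trans. apply Rabs_triang. 
    eapply Rle_trans. apply Rplus_le_compat_r. apply Rabs_triang. lra.
Qed.

Lemma zs_S_ge N f : (forall k, 0 <= f k) -> zs N f <= zs (S N) f.
Proof. intros H. cbn [zs]. pose proof (H (Z.of_nat (S N))). pose proof (H (- Z.of_nat (S N))%Z). lra. Qed.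

Lemma zs_mono N M f : (forall k, 0 <= f k) -> (N <= M)%nat -> zs N f <= zs M f.
Proof.
  intros H HNM. induction HNM. lra. eapply Rle_trans. apply IHHNM. apply zs_S_ge; auto.
Qed.

Lemma zs_reflect N f : zs N f = zs N (fun k => f (- k)%Z).
Proof.
  induction N; cbn [zs].
  - reflexivity.
  - rewrite IHN. cbv beta. rewrite Z.opp_involutive. ring.
Qed.

Lemma zs_tele N (H : Z -> R) : zs N (fun k => H (k + 1)%Z - H k) = H (Z.of_nat N + 1)%Z - H (- Z.of_nat N)%Z.
Proof.
  induction N; cbn [zs].
  - simpl. ring.
  - rewrite IHN. replace (- Z.of_nat (S N) + 1)%Z with (- Z.of_nat N)%Z by lia.
    replace (Z.of_nat (S N)) with (Z.of_nat N + 1)%Z by lia. ring.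
Qed.

Lemma lim_plus {T} (F : (T -> Prop) -> Prop) {FF : Filter F} (f g : T -> R) a b :
  filterlim f F (locally a) -> filterlim g F (locally b) ->
  filterlim (fun s => f s + g s) F (locally (a + b)).
Proof.
  intros Hf Hg.
  eapply filterlim_comp_2; [exact Hf | exact Hg |].
  apply (filterlim_plus (K := R_AbsRing) (V := R_NormedModule) a b).
Qed.

Lemma lim_mult {T} (F : (T -> Prop) -> Prop) {FF : Filter F} (f g : T -> R) a b :
  filterlim f F (locally a) -> filterlim g F (locally b) ->
  filterlim (fun s => f s * g s) F (locally (a * b)).
Proof.
  intros Hf Hg.
  eapply filterlim_comp_2; [exact Hf | exact Hg |].
  apply (filterlim_mult a b).
Qed.

Lemma zs_filterlim {T} (F : (T -> Prop) -> Prop) {FF : Filter F} N (f : T -> Z -> R) (g : Z -> R) :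
  (forall k, filterlim (fun s => f s k) F (locally (g k))) ->
  filterlim (fun s => zs N (f s)) F (locally (zs N g)).
Proof.
  intros H. induction N; cbn [zs].
  - apply H.
  - apply lim_plus; auto. apply lim_plus; auto.
Qed.

Lemma sum_n_first {G : AbelianMonoid} (a : nat -> G) n :
  sum_n a (S n) = plus (a O) (sum_n (fun i => a (S i)) n).
Proof.
  induction n.
  - rewrite sum_Sn, !sum_O. reflexivity.
  - rewrite sum_Sn, IHn, sum_Sn. rewrite plus_assoc. reflexivity.
Qed.

Lemma Re_sum_n (a : nat -> C) n : Re (sum_n a n) = sum_n (fun i => Re (a i)) n.
Proof.
  induction n.
  - rewrite !sum_O. reflexivity.
  - rewrite !sum_Sn. rewrite <- IHn. reflexivity.
Qed.

Lemma Im_sum_n (a : nat -> C) n : Im (sum_n a n) = sum_n (fun i => Im (a i)) n.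
Proof.
  induction n.
  - rewrite !sum_O. reflexivity.
  - rewrite !sum_Sn. rewrite <- IHn. reflexivity.
Qed.

Lemma sum_n_ext_R (a b : nat -> R) n : (forall i, a i = b i) -> sum_n a n = sum_n b n.
Proof. intros H. apply sum_n_ext. exact H. Qed.

Lemma sum_n_zs (g : Z -> R) N :
  sum_n (fun i => g (Z.of_nat i - Z.of_nat N)%Z) (2 * N) = zs N g.
Proof.
  revert g. induction N; intros g.
  - simpl. rewrite sum_O. simpl. reflexivity.
  - replace (2 * S N)%nat with (S (S (2 * N))) by lia.
    rewrite sum_Sn, sum_n_first. cbn [zs].
    rewrite <- IHN.
    assert (E : sum_n (fun i => g (Z.of_nat (S i) - Z.of_nat (S N))%Z) (2 * N)
              = sum_n (fun i => g (Z.of_nat i - Z.of_nat N)%Z) (2 * N)).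
    { apply sum_n_ext. intros i. f_equal. lia. }
    rewrite E. 
    replace (Z.of_nat 0 - Z.of_nat (S N))%Z with (- Z.of_nat (S N))%Z by lia.
    replace (Z.of_nat (S (S (2 * N))) - Z.of_nat (S N))%Z with (Z.of_nat (S N)) by lia.
    unfold plus; simpl; ring.
Qed.

Definition rho (t Y : R) := t * t + Y * Y.
Definition Pw (t Y q : R) := Rpower (rho t Y) q.

Lemma Rpower_pos x y : 0 < Rpower x y.
Proof. unfold Rpower. apply exp_pos. Qed.

Lemma rho_pos t Y : Y <> 0 -> 0 < rho t Y.
Proof. intros H. unfold rho. assert (0 < Y * Y) by (apply Rsqr_pos_lt; auto). nra. Qed.

Lemma Pw_pos t Y q : 0 < Pw t Y q.
Proof. apply Rpower_pos. Qed.

Lemma Pw_plus t Y q r : Pw t Y (q + r) = Pw t Y q * Pw t Y r.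
Proof. unfold Pw. apply Rpower_plus. Qed.

Lemma Pw_1 t Y : Y <> 0 -> Pw t Y 1 = rho t Y.
Proof. intros H. unfold Pw. apply Rpower_1. apply rho_pos; auto. Qed.

Lemma Pw_shift t Y q : Y <> 0 -> Pw t Y q = rho t Y * Pw t Y (q - 1).
Proof.
  intros H. replace q with (1 + (q - 1)) at 1 by ring. rewrite Pw_plus, Pw_1; auto.
Qed.

Lemma Cmod_pow t Y s : Y <> 0 -> Rpower (Cmod (t, Y)) (2 * s) = Pw t Y s.
Proof.
  intros H. unfold Cmod, Pw. simpl fst; simpl snd.
  replace (t ^ 2 + Y ^ 2) with (rho t Y) by (unfold rho; ring).
  rewrite <- Rpower_sqrt by (apply rho_pos; auto).
  rewrite Rpower_mult. f_equal. field.
Qed.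

Lemma term_formula t Y s : Y <> 0 ->
  Cinv (Cmult (Cmult (t, Y) (t, Y)) (RtoC (Rpower (Cmod (t, Y)) (2 * s)))) =
  ((t * t - Y * Y) * Pw t Y (-2 - s), - (2 * t * Y) * Pw t Y (-2 - s)).
Proof.
  intros H. rewrite Cmod_pow by auto.
  assert (Hr := rho_pos t Y H).
  assert (Hp := Pw_pos t Y s).
  assert (E : Pw t Y (-2 - s) = / (rho t Y * rho t Y * Pw t Y s)).
  { unfold Pw. replace (-2 - s) with (- (INR 2 + s)) by (simpl; ring).
    rewrite Rpower_Ropp, Rpower_plus, Rpower_pow by auto. simpl. f_equal. ring. }
  rewrite E. unfold Cinv, Cmult, RtoC. simpl fst; simpl snd.
  unfold rho in *.
  assert (Hq : ((t * t - Y * Y) * Pw t Y s) ^ 2 + ((t * Y + Y * t) * Pw t Y s) ^ 2 <> 0).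
  { replace (((t * t - Y * Y) * Pw t Y s) ^ 2 + ((t * Y + Y * t) * Pw t Y s) ^ 2)
      with (((t * t + Y * Y) * Pw t Y s) ^ 2) by ring.
    apply pow_nonzero. apply Rgt_not_eq. apply Rmult_lt_0_compat; lra. }
  f_equal; field; repeat split; lra.
Qed.

Lemma isd_mult (f g : R -> R) (x df dg : R) : is_derive f x df -> is_derive g x dg ->
  is_derive (fun t => f t * g t) x (df * g x + f x * dg).
Proof. intros H1 H2. apply is_derive_Reals. apply is_derive_Reals in H1, H2.
  apply (derivable_pt_lim_mult f g x df dg H1 H2). Qed.

Lemma isd_plus (f g : R -> R) (x df dg : R) : is_derive f x df -> is_derive g x dg ->
  is_derive (fun t => f t + g t) x (df + dg).
Proof. intros H1 H2. apply is_derive_Reals. apply is_derive_Reals in H1, H2.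
  apply (derivable_pt_lim_plus f g x df dg H1 H2). Qed.

Lemma isd_id (x : R) : is_derive (fun t => t) x 1.
Proof. apply is_derive_Reals. apply derivable_pt_lim_id. Qed.

Lemma isd_const (c x : R) : is_derive (fun _ => c) x 0.
Proof. apply is_derive_Reals. apply derivable_pt_lim_const. Qed.

Lemma isd_eq (f : R -> R) (x l lp : R) : is_derive f x l -> l = lp -> is_derive f x lp.
Proof. intros H ->; auto. Qed.

Lemma isd_Pw Y q t : Y <> 0 -> is_derive (fun t => Pw t Y q) t (2 * q * t * Pw t Y (q - 1)).
Proof.
  intros HY. unfold Pw, rho.
  assert (Hr : 0 < t * t + Y * Y) by (apply (rho_pos t Y HY)).
  apply is_derive_Reals.
  assert (H1 := derivable_pt_lim_power (t * t + Y * Y) q Hr).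
  assert (H2 : derivable_pt_lim (fun t => t * t + Y * Y) t (2 * t)).
  { apply is_derive_Reals. eapply isd_eq. apply isd_plus. apply isd_mult; apply isd_id. apply isd_const. cbv beta; ring. }
  assert (H3 := derivable_pt_lim_comp (fun t => t * t + Y * Y) (fun x => Rpower x q) t _ _ H2 H1).
  unfold comp in H3. replace (2 * q * t * Rpower (t * t + Y * Y) (q - 1)) with (q * Rpower (t * t + Y * Y) (q - 1) * (2 * t)) by ring.
  exact H3.
Qed.

Lemma mid2 (f f1 f2 : R -> R) a h M :
  (forall u, Rmin a (a + h) <= u <= Rmax a (a + h) ->
     is_derive f u (f1 u) /\ is_derive f1 u (f2 u) /\ Rabs (f2 u) <= M) ->
  Rabs (f (a + h) - f a - h * f1 a) <= M * (h * h).
Proof.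
  intros H.
  set (g := fun u => f u + (- f1 a) * u).
  destruct (MVT_abs g (fun u => f1 u - f1 a) a (a + h)) as [c [Hc1 Hc2]].
  { intros c Hc. apply is_derive_Reals. unfold g. 
    destruct (H c Hc) as [Hd1 _].
    apply (isd_eq _ _ (f1 c + (0 * c + (- f1 a) * 1))).
    apply (isd_plus f (fun u => - f1 a * u)). exact Hd1.
    apply (isd_mult (fun _ => - f1 a) (fun u => u)). apply isd_const. apply isd_id. ring. }
  unfold g in Hc1.
  replace (f (a + h) - f a - h * f1 a) with (f (a + h) + (- f1 a) * (a + h) - (f a + (- f1 a) * a)) by ring.
  rewrite Hc1.
  assert (Hsub : forall u, Rmin a c <= u <= Rmax a c -> Rmin a (a + h) <= u <= Rmax a (a + h)).
  { intros u Hu. unfold Rmin, Rmax in Hu, Hc2 |- *. destruct (Rle_dec a c); destruct (Rle_dec a (a + h)); lra. }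
  destruct (MVT_abs f1 f2 a c) as [c' [Hc'1 Hc'2]].
  { intros u Hu. apply is_derive_Reals. apply (H u (Hsub u Hu)). }
  rewrite Hc'1.
  assert (HM := proj2 (proj2 (H c' (Hsub c' Hc'2)))).
  assert (Hca : Rabs (c - a) <= Rabs (a + h - a)).
  { unfold Rmin, Rmax in Hc2. destruct (Rle_dec a (a + h)).
    - rewrite !Rabs_right; lra.
    - rewrite !Rabs_left1; lra. }
  replace (a + h - a) with h in * by ring.
  assert (0 <= M) by (eapply Rle_trans; [apply Rabs_pos | exact HM]).
  replace (M * (h * h)) with (M * Rabs h * Rabs h).
  2:{ rewrite Rmult_assoc. rewrite <- Rabs_mult. rewrite Rabs_right. ring. apply Rle_ge. apply Rle_0_sqr. }
  apply Rmult_le_compat_r. apply Rabs_pos.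
  apply Rmult_le_compat; try apply Rabs_pos; auto.
Qed.

Lemma isd_Pw' Y q q' t : Y <> 0 -> q' = q - 1 -> is_derive (fun t => Pw t Y q) t (2 * q * t * Pw t Y q').
Proof. intros H ->. apply isd_Pw; auto. Qed.

Definition G1 s Y t := - t * Pw t Y (-1 - s).
Definition g1 s Y t := - Pw t Y (-1 - s) + 2 * (1 + s) * (t * t) * Pw t Y (-2 - s).
Definition h1 s Y t := 6 * (1 + s) * t * Pw t Y (-2 - s) - 4 * (1 + s) * (2 + s) * (t * t * t) * Pw t Y (-3 - s).
Definition G2 s Y t := Y * Pw t Y (-1 - s).
Definition g2 s Y t := -2 * (1 + s) * Y * t * Pw t Y (-2 - s).
Definition h2 s Y t := -2 * (1 + s) * Y * Pw t Y (-2 - s) + 4 * (1 + s) * (2 + s) * Y * (t * t) * Pw t Y (-3 - s).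

Lemma isd_neg (x : R) : is_derive (fun t => - t) x (-1).
Proof. apply is_derive_Reals. apply (derivable_pt_lim_opp (fun t => t) x 1). apply derivable_pt_lim_id. Qed.

Lemma isd_scal (f : R -> R) (k x l : R) : is_derive f x l -> is_derive (fun t => k * f t) x (k * l).
Proof. intros H. apply (isd_eq _ _ (0 * f x + k * l)). apply (isd_mult (fun _ => k) f). apply isd_const. auto. ring. Qed.

Lemma isd_sq (x : R) : is_derive (fun t => t * t) x (2 * x).
Proof. apply (isd_eq _ _ (1 * x + x * 1)). apply (isd_mult (fun t => t) (fun t => t)); apply isd_id. ring. Qed.

Lemma isd_cube (x : R) : is_derive (fun t => t * t * t) x (3 * (x * x)).
Proof. apply (isd_eq _ _ (2 * x * x + (x * x) * 1)). apply (isd_mult (fun t => t * t) (fun t => t)). apply isd_sq. apply isd_id. ring. Qed.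

Lemma dG1 s Y t : Y <> 0 -> is_derive (G1 s Y) t (g1 s Y t).
Proof.
  intros HY. unfold G1, g1.
  apply (isd_eq _ _ ((-1) * Pw t Y (-1 - s) + (- t) * (2 * (-1 - s) * t * Pw t Y (-2 - s)))).
  apply (isd_mult (fun t => - t) (fun t => Pw t Y (-1 - s))). apply isd_neg.
  apply isd_Pw'; auto; ring. ring.
Qed.

Lemma isd_opp (f : R -> R) (x l : R) : is_derive f x l -> is_derive (fun t => - f t) x (- l).
Proof. intros H. apply is_derive_Reals. apply is_derive_Reals in H. apply (derivable_pt_lim_opp f x l H). Qed.

Lemma isd_minus (f g : R -> R) (x df dg : R) : is_derive f x df -> is_derive g x dg ->
  is_derive (fun t => f t - g t) x (df - dg).
Proof. intros H1 H2. apply is_derive_Reals. apply is_derive_Reals in H1, H2.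
  apply (derivable_pt_lim_minus f g x df dg H1 H2). Qed.

Lemma dg1 s Y t : Y <> 0 -> is_derive (g1 s Y) t (h1 s Y t).
Proof.
  intros HY. unfold g1, h1.
  apply (isd_eq _ _ (- (2 * (-1 - s) * t * Pw t Y (-2 - s)) + ((2 * (1 + s) * (2 * t)) * Pw t Y (-2 - s) + (2 * (1 + s) * (t * t)) * (2 * (-2 - s) * t * Pw t Y (-3 - s))))).
  apply (isd_plus (fun t => - Pw t Y (-1 - s)) (fun t => 2 * (1 + s) * (t * t) * Pw t Y (-2 - s))).
  - apply isd_opp. apply isd_Pw'; auto; ring.
  - apply (isd_mult (fun t => 2 * (1 + s) * (t * t)) (fun t => Pw t Y (-2 - s))).
    + apply isd_scal. apply isd_sq.
    + apply isd_Pw'; auto; ring.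
  - ring.
Qed.

Lemma dG2 s Y t : Y <> 0 -> is_derive (G2 s Y) t (g2 s Y t).
Proof.
  intros HY. unfold G2, g2.
  apply (isd_eq _ _ (Y * (2 * (-1 - s) * t * Pw t Y (-2 - s)))).
  apply isd_scal. apply isd_Pw'; auto; ring. ring.
Qed.

Lemma dg2 s Y t : Y <> 0 -> is_derive (g2 s Y) t (h2 s Y t).
Proof.
  intros HY. unfold g2, h2.
  apply (isd_eq _ _ ((-2 * (1 + s) * Y * 1) * Pw t Y (-2 - s) + (-2 * (1 + s) * Y * t) * (2 * (-2 - s) * t * Pw t Y (-3 - s)))).
  apply (isd_mult (fun t => -2 * (1 + s) * Y * t) (fun t => Pw t Y (-2 - s))).
  - apply isd_scal. apply isd_id.
  - apply isd_Pw'; auto; ring.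
  - ring.
Qed.

Lemma Pw_sh t Y q q' : Y <> 0 -> q' = q - 1 -> Pw t Y q' = Pw t Y q / rho t Y.
Proof.
  intros HY ->. rewrite (Pw_shift t Y q HY). field. apply Rgt_not_eq, rho_pos; auto.
Qed.

Lemma abs_sq t : Rabs t * Rabs t = t * t.
Proof. rewrite <- Rabs_mult. apply Rabs_right. apply Rle_ge, Rle_0_sqr. Qed.

Lemma tY_le t Y : 2 * Rabs t * Rabs Y <= rho t Y.
Proof.
  unfold rho. rewrite <- (abs_sq t), <- (abs_sq Y).
  pose proof (Rle_0_sqr (Rabs t - Rabs Y)). unfold Rsqr in H. nra.
Qed.

Lemma t2_le t Y : t * t <= rho t Y.
Proof. unfold rho. pose proof (Rle_0_sqr Y). unfold Rsqr in H. lra. Qed.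

Lemma Y2_le t Y : Y * Y <= rho t Y.
Proof. unfold rho. pose proof (Rle_0_sqr t). unfold Rsqr in H. lra. Qed.

Lemma h1_bound s Y t : 0 <= s <= 1 -> Y <> 0 ->
  Rabs (h1 s Y t) <= 28 * Pw t Y (- s) / (Rabs Y * rho t Y).
Proof.
  intros Hs HY. unfold h1.
  assert (Hr := rho_pos t Y HY). set (r := rho t Y) in *.
  assert (HP := Pw_pos t Y (-s)). set (P := Pw t Y (-s)) in *.
  assert (HaY : 0 < Rabs Y) by (apply Rabs_pos_lt; auto).
  rewrite (Pw_sh t Y (-2 - s) (-3 - s)) by (auto; ring).
  rewrite (Pw_sh t Y (-1 - s) (-2 - s)) by (auto; ring).
  rewrite (Pw_sh t Y (- s) (-1 - s)) by (auto; ring).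
  fold r P.
  replace (6 * (1 + s) * t * (P / r / r) - 4 * (1 + s) * (2 + s) * (t * t * t) * (P / r / r / r))
    with ((P / (r * r * r)) * (t * (6 * (1 + s) * r - 4 * (1 + s) * (2 + s) * (t * t)))) by (field; lra).
  rewrite Rabs_mult, Rabs_mult. rewrite (Rabs_right (P / (r * r * r))).
  2:{ apply Rle_ge. apply Rlt_le. apply Rdiv_lt_0_compat; auto. repeat apply Rmult_lt_0_compat; auto. }
  assert (H1 : Rabs (6 * (1 + s) * r - 4 * (1 + s) * (2 + s) * (t * t)) <= 36 * r).
  { pose proof (t2_le t Y). fold r in H. pose proof (Rle_0_sqr t). unfold Rsqr in H0.
    assert (Hk : 0 <= (1 + s) * (2 + s) <= 6) by nra.
    assert (Hk2 : (1 + s) * (2 + s) * (t * t) <= 6 * r) by nra.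
    assert (Hk3 : 0 <= (1 + s) * (2 + s) * (t * t)) by nra.
    apply Rabs_le. split; nra. }
  assert (H2 : 2 * Rabs t * Rabs Y <= r) by apply tY_le.
  assert (H3 : 0 <= Rabs t) by apply Rabs_pos.
  apply (Rle_trans _ (P / (r * r * r) * (Rabs t * (36 * r)))).
  - apply Rmult_le_compat_l. apply Rlt_le. apply Rdiv_lt_0_compat; auto. repeat apply Rmult_lt_0_compat; auto.
    apply Rmult_le_compat_l; auto.
  - unfold Rdiv. apply (Rmult_le_reg_r (Rabs Y * r * r * r)). repeat apply Rmult_lt_0_compat; auto.
    replace (P * / (r * r * r) * (Rabs t * (36 * r)) * (Rabs Y * r * r * r)) with (P * r * (36 * (Rabs t * Rabs Y))) by (field; lra).
    replace (28 * P * / (Rabs Y * r) * (Rabs Y * r * r * r)) with (P * r * (28 * r)) by (field; lra).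
    apply Rmult_le_compat_l. apply Rlt_le, Rmult_lt_0_compat; auto. nra.
Qed.

Lemma h2_bound s Y t : 0 <= s <= 1 -> Y <> 0 ->
  Rabs (h2 s Y t) <= 28 * Pw t Y (- s) / (Rabs Y * rho t Y).
Proof.
  intros Hs HY. unfold h2.
  assert (Hr := rho_pos t Y HY). set (r := rho t Y) in *.
  assert (HP := Pw_pos t Y (-s)). set (P := Pw t Y (-s)) in *.
  assert (HaY : 0 < Rabs Y) by (apply Rabs_pos_lt; auto).
  rewrite (Pw_sh t Y (-2 - s) (-3 - s)) by (auto; ring).
  rewrite (Pw_sh t Y (-1 - s) (-2 - s)) by (auto; ring).
  rewrite (Pw_sh t Y (- s) (-1 - s)) by (auto; ring).
  fold r P.
  replace (-2 * (1 + s) * Y * (P / r / r) + 4 * (1 + s) * (2 + s) * Y * (t * t) * (P / r / r / r))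
    with ((P / (r * r * r)) * (Y * (-2 * (1 + s) * r + 4 * (1 + s) * (2 + s) * (t * t)))) by (field; lra).
  rewrite Rabs_mult, Rabs_mult. rewrite (Rabs_right (P / (r * r * r))).
  2:{ apply Rle_ge. apply Rlt_le. apply Rdiv_lt_0_compat; auto. repeat apply Rmult_lt_0_compat; auto. }
  assert (H1 : Rabs (-2 * (1 + s) * r + 4 * (1 + s) * (2 + s) * (t * t)) <= 28 * r).
  { pose proof (t2_le t Y). fold r in H. pose proof (Rle_0_sqr t). unfold Rsqr in H0.
    assert (Hk : 0 <= (1 + s) * (2 + s) <= 6) by nra.
    assert (Hk2 : (1 + s) * (2 + s) * (t * t) <= 6 * r) by nra.
    assert (Hk3 : 0 <= (1 + s) * (2 + s) * (t * t)) by nra.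
    apply Rabs_le. split; nra. }
  assert (H2 : Rabs Y * Rabs Y <= r) by (rewrite abs_sq; apply Y2_le).
  apply (Rle_trans _ (P / (r * r * r) * (Rabs Y * (28 * r)))).
  - apply Rmult_le_compat_l. apply Rlt_le. apply Rdiv_lt_0_compat; auto. repeat apply Rmult_lt_0_compat; auto.
    apply Rmult_le_compat_l; auto. apply Rabs_pos.
  - unfold Rdiv. apply (Rmult_le_reg_r (Rabs Y * r * r * r)). repeat apply Rmult_lt_0_compat; auto.
    replace (P * / (r * r * r) * (Rabs Y * (28 * r)) * (Rabs Y * r * r * r)) with (P * r * (28 * (Rabs Y * Rabs Y))) by (field; lra).
    replace (28 * P * / (Rabs Y * r) * (Rabs Y * r * r * r)) with (P * r * (28 * r)) by (field; lra).
    apply Rmult_le_compat_l. apply Rlt_le, Rmult_lt_0_compat; auto. nra.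
Qed.

Lemma Pw_negs_bound t Y s : 0 <= s <= 1 -> Y <> 0 -> Pw t Y (- s) <= 1 + / (Y * Y).
Proof.
  intros Hs HY. assert (Hr := rho_pos t Y HY). assert (HY2 : 0 < Y * Y) by (apply Rsqr_pos_lt; auto).
  assert (HiY : 0 < / (Y * Y)) by (apply Rinv_0_lt_compat; auto).
  unfold Pw. destruct (Rle_lt_dec 1 (rho t Y)) as [H1|H1].
  - assert (Rpower (rho t Y) (- s) <= Rpower (rho t Y) 0) by (apply Rle_Rpower; lra).
    rewrite Rpower_O in H by lra. lra.
  - assert (E : Rpower (rho t Y) (- s) = Rpower (/ rho t Y) s).
    { unfold Rpower. rewrite ln_Rinv by lra. f_equal. ring. }
    rewrite E.
    assert (Hb : 1 <= / rho t Y). { rewrite <- Rinv_1. apply Rinv_le_contravar; lra. }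
    assert (Rpower (/ rho t Y) s <= Rpower (/ rho t Y) 1) by (apply Rle_Rpower; lra).
    rewrite Rpower_1 in H by lra.
    assert (/ rho t Y <= / (Y * Y)). { apply Rinv_le_contravar; auto. apply Y2_le. }
    lra.
Qed.

Lemma rho_shift t u Y y d : 0 < y -> y * y <= Y * Y -> Rabs (u - t) <= d ->
  y * y * rho t Y <= 4 * (y * y + d * d) * rho u Y.
Proof.
  intros Hy HY Hud. unfold rho.
  set (e := u - t). replace u with (t + e) by (unfold e; ring).
  assert (He : e * e <= d * d). { rewrite <- (abs_sq e). pose proof (Rabs_pos e). assert (Rabs e <= d) by exact Hud. apply Rmult_le_compat; lra. }
  assert (H1 : t * t <= 2 * ((t + e) * (t + e)) + 2 * (e * e)).
  { pose proof (Rle_0_sqr (t + 2 * e)). unfold Rsqr in H. nra. }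
  assert (H2 : 0 <= (t + e) * (t + e)) by apply Rle_0_sqr.
  assert (Hd : 0 <= d * d) by apply Rle_0_sqr.
  nra.
Qed.

Definition A1 s Y t d := g1 s Y t - (G1 s Y (t + d) - G1 s Y t) / d.
Definition A2 s Y t d := g2 s Y t - (G2 s Y (t + d) - G2 s Y t) / d.

Definition KA y d := 112 * d * (1 + / (y * y)) * (y * y + d * d) / (y * y).

Lemma A_bound_gen (G g h : R -> R) (s Y t y d : R) : 0 <= s <= 1 -> 0 < y -> y <= Rabs Y -> 0 < d ->
  (forall u, is_derive G u (g u)) -> (forall u, is_derive g u (h u)) ->
  (forall u, Rabs (h u) <= 28 * Pw u Y (- s) / (Rabs Y * rho u Y)) ->
  Rabs (g t - (G (t + d) - G t) / d) <= KA y d / (Rabs Y * rho t Y).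
Proof.
  intros Hs Hy HyY Hd HG Hg Hh.
  assert (HY : Y <> 0). { intros ->. rewrite Rabs_R0 in HyY. lra. }
  assert (HaY : 0 < Rabs Y) by lra.
  assert (Hy2 : y * y <= Y * Y). { rewrite <- (abs_sq Y). nra. }
  assert (Hr := rho_pos t Y HY).
  set (M := 28 * (1 + / (y * y)) * (4 * (y * y + d * d)) / (y * y) / (Rabs Y * rho t Y)).
  assert (Hmid : Rabs (G (t + d) - G t - d * g t) <= M * (d * d)).
  { apply (mid2 G g h t d M). intros u Hu. split; [apply HG | split; [apply Hg |]].
    eapply Rle_trans. apply Hh.
    assert (Hru := rho_pos u Y HY).
    assert (Hsh : y * y * rho t Y <= 4 * (y * y + d * d) * rho u Y).
    { apply rho_shift; auto. unfold Rmin, Rmax in Hu. destruct (Rle_dec t (t + d)); 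
      apply Rabs_le; lra. }
    assert (HP := Pw_negs_bound u Y s Hs HY).
    assert (HP0 := Pw_pos u Y (-s)).
    assert (Hiy : / (Y * Y) <= / (y * y)) by (apply Rinv_le_contravar; nra).
    unfold M. unfold Rdiv.
    apply (Rle_trans _ (28 * (1 + / (y * y)) * / (Rabs Y * rho u Y))).
    - apply Rmult_le_compat_r. apply Rlt_le, Rinv_0_lt_compat, Rmult_lt_0_compat; auto. lra.
    - assert (0 < / (y * y)) by (apply Rinv_0_lt_compat; nra).
      apply (Rmult_le_reg_r (Rabs Y * rho u Y * rho t Y * (y * y))). 
      repeat apply Rmult_lt_0_compat; nra.
      replace (28 * (1 + / (y * y)) * / (Rabs Y * rho u Y) * (Rabs Y * rho u Y * rho t Y * (y * y)))
        with (28 * (1 + / (y * y)) * (y * y * rho t Y)) by (field; repeat split; nra).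
      replace (28 * (1 + / (y * y)) * (4 * (y * y + d * d)) * / (y * y) * / (Rabs Y * rho t Y) *
          (Rabs Y * rho u Y * rho t Y * (y * y))) with (28 * (1 + / (y * y)) * (4 * (y * y + d * d) * rho u Y))
        by (field; repeat split; nra).
      apply Rmult_le_compat_l; auto. nra. }
  replace (g t - (G (t + d) - G t) / d) with (- (G (t + d) - G t - d * g t) / d) by (field; lra).
  unfold Rdiv at 1. rewrite Rabs_mult, Rabs_Ropp, (Rabs_right (/ d)) by (apply Rle_ge, Rlt_le, Rinv_0_lt_compat; auto).
  apply (Rle_trans _ (M * (d * d) * / d)).
  - apply Rmult_le_compat_r; auto. apply Rlt_le, Rinv_0_lt_compat; auto.
  - unfold M, KA. right. field. repeat split; nra.
Qed.

Lemma A1_bound s Y t y d : 0 <= s <= 1 -> 0 < y -> y <= Rabs Y -> 0 < d ->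
  Rabs (A1 s Y t d) <= KA y d / (Rabs Y * rho t Y).
Proof.
  intros Hs Hy HyY Hd. assert (HY : Y <> 0). { intros ->. rewrite Rabs_R0 in HyY. lra. }
  unfold A1. apply (A_bound_gen (G1 s Y) (g1 s Y) (h1 s Y) s); auto.
  intros; apply dG1; auto. intros; apply dg1; auto. intros; apply h1_bound; auto.
Qed.

Lemma A2_bound s Y t y d : 0 <= s <= 1 -> 0 < y -> y <= Rabs Y -> 0 < d ->
  Rabs (A2 s Y t d) <= KA y d / (Rabs Y * rho t Y).
Proof.
  intros Hs Hy HyY Hd. assert (HY : Y <> 0). { intros ->. rewrite Rabs_R0 in HyY. lra. }
  unfold A2. apply (A_bound_gen (G2 s Y) (g2 s Y) (h2 s Y) s); auto.
  intros; apply dG2; auto. intros; apply dg2; auto. intros; apply h2_bound; auto.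
Qed.

Definition S2 N (F : Z -> Z -> R) := zs N (fun m => zs N (fun n => F m n)).

Definition LimR (u : nat -> R) : R := real (Lim_seq u).

Lemma fin_lim u : ex_finite_lim_seq u -> is_lim_seq u (LimR u).
Proof.
  intros [l Hl]. unfold LimR. rewrite (is_lim_seq_unique _ _ Hl). simpl. exact Hl.
Qed.

Lemma LimR_unique u (l : R) : is_lim_seq u l -> LimR u = l.
Proof. intros H. unfold LimR. rewrite (is_lim_seq_unique _ _ H). reflexivity. Qed.

Lemma lim_le_R u v (l1 l2 : R) : (forall n, u n <= v n) -> is_lim_seq u l1 -> is_lim_seq v l2 -> l1 <= l2.
Proof. intros H H1 H2. pose proof (is_lim_seq_le u v l1 l2 H H1 H2). simpl in H0. exact H0. Qed.

Lemma lim_le_ev u v (l1 l2 : R) N0 : (forall n, (N0 <= n)%nat -> u n <= v n) -> is_lim_seq u l1 -> is_lim_seq v l2 -> l1 <= l2.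
Proof.
  intros H H1 H2.
  apply (lim_le_R (fun n => u (n + N0)%nat) (fun n => v (n + N0)%nat)).
  - intros; apply H; lia.
  - apply (is_lim_seq_incr_n u N0 l1). exact H1.
  - apply (is_lim_seq_incr_n v N0 l2). exact H2.
Qed.

Lemma incr_le u : (forall n, u n <= u (S n)) -> forall n m, (n <= m)%nat -> u n <= u m.
Proof.
  intros H n m Hnm. induction Hnm. lra. eapply Rle_trans. apply IHHnm. apply H.
Qed.

Lemma dom_seq (u v : nat -> R) B :
  (forall N, Rabs (u (S N) - u N) <= v (S N) - v N) ->
  (forall N, v N <= B) ->
  ex_finite_lim_seq v /\ ex_finite_lim_seq u /\
  (forall N, v N <= LimR v) /\
  (forall N, Rabs (LimR u - u N) <= LimR v - v N).
Proof.
  intros Hd HB.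
  assert (Hinc : forall N, v N <= v (S N)).
  { intros N. pose proof (Hd N). pose proof (Rabs_pos (u (S N) - u N)). lra. }
  assert (Hv : ex_finite_lim_seq v) by (apply (ex_finite_lim_seq_incr v B); auto).
  assert (Hdiff : forall N M, (N <= M)%nat -> Rabs (u M - u N) <= v M - v N).
  { intros N M HNM. induction HNM.
    - replace (u N - u N) with 0 by ring. rewrite Rabs_R0. lra.
    - replace (u (S m) - u N) with ((u (S m) - u m) + (u m - u N)) by ring.
      eapply Rle_trans. apply Rabs_triang. pose proof (Hd m). lra. }
  assert (Hlv := fin_lim v Hv).
  assert (HvL : forall N, v N <= LimR v).
  { intros N. apply (lim_le_ev (fun _ => v N) v (v N) (LimR v) N).
    - intros n Hn. apply incr_le; auto.
    - apply is_lim_seq_const.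
    - exact Hlv. }
  assert (Hu : ex_finite_lim_seq u).
  { apply ex_lim_seq_cauchy_corr. intros eps.
    assert (Hc : ex_lim_seq_cauchy v) by (apply ex_lim_seq_cauchy_corr; auto).
    destruct (Hc eps) as [N0 HN0]. exists N0. intros n m Hn Hm.
    destruct (Nat.le_ge_cases n m) as [Hnm|Hnm].
    - rewrite Rabs_minus_sym. eapply Rle_lt_trans. apply Hdiff; auto.
      specialize (HN0 m n Hm Hn). pose proof (Rle_abs (v m - v n)). lra.
    - eapply Rle_lt_trans. apply Hdiff; auto.
      specialize (HN0 n m Hn Hm). pose proof (Rle_abs (v n - v m)). lra. }
  assert (Hlu := fin_lim u Hu).
  repeat split; auto.
  intros N. apply Rabs_le. split.
  - cut (v N - LimR v + u N <= LimR u). lra.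
    apply (lim_le_ev (fun M => v N - v M + u N) u (v N - LimR v + u N) (LimR u) N).
    + intros M HM. pose proof (Hdiff N M HM). apply Rabs_le_between in H. lra.
    + apply is_lim_seq_plus'. apply is_lim_seq_minus'. apply is_lim_seq_const. auto. apply is_lim_seq_const.
    + auto.
  - cut (LimR u <= LimR v - v N + u N). lra.
    apply (lim_le_ev u (fun M => v M - v N + u N) (LimR u) (LimR v - v N + u N) N).
    + intros M HM. pose proof (Hdiff N M HM). apply Rabs_le_between in H. lra.
    + auto.
    + apply is_lim_seq_plus'. apply is_lim_seq_minus'. auto. apply is_lim_seq_const. apply is_lim_seq_const.
Qed.

Lemma ball_R (y eps z : R) : ball y eps z <-> Rabs (z - y) < eps.
Proof. unfold ball; simpl; unfold AbsRing_ball, abs, minus, plus, opp; simpl. tauto. Qed.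

Lemma lim_R_iff {T} (F : (T -> Prop) -> Prop) {FF : Filter F} (f : T -> R) (y : R) :
  filterlim f F (locally y) <-> (forall eps, 0 < eps -> F (fun x => Rabs (f x - y) < eps)).
Proof.
  rewrite filterlim_locally. split.
  - intros H eps He. specialize (H (mkposreal eps He)). eapply filter_imp; [|exact H].
    intros x Hx. apply ball_R in Hx. exact Hx.
  - intros H eps. specialize (H eps (cond_pos eps)). eapply filter_imp; [|exact H].
    intros x Hx. apply ball_R. exact Hx.
Qed.

Definition Delta N (F : Z -> Z -> R) :=
  zs N (fun n => F (Z.of_nat (S N)) n) + zs N (fun n => F (- Z.of_nat (S N))%Z n)
  + zs (S N) (fun m => F m (Z.of_nat (S N)) + F m (- Z.of_nat (S N))%Z).

Lemma S2_S N F : S2 (S N) F = S2 N F + Delta N F.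
Proof.
  unfold S2, Delta.
  rewrite (zs_ext (S N) (fun m => zs (S N) (fun n => F m n))
     (fun m => zs N (fun n => F m n) + (F m (Z.of_nat (S N)) + F m (- Z.of_nat (S N))%Z))).
  2:{ intros k _. cbn [zs]. ring. }
  rewrite zs_plus. cbn [zs]. ring.
Qed.

Lemma Delta_abs N a b : (forall m n, Rabs (a m n) <= b m n) -> Rabs (Delta N a) <= Delta N b.
Proof.
  intros H. unfold Delta.
  eapply Rle_trans. apply Rabs_triang. eapply Rle_trans. apply Rplus_le_compat_r. apply Rabs_triang.
  repeat apply Rplus_le_compat.
  - eapply Rle_trans. apply zs_abs. apply zs_le. intros; auto.
  - eapply Rle_trans. apply zs_abs. apply zs_le. intros; auto.
  - eapply Rle_trans. apply zs_abs. apply zs_le. intros k _.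
    eapply Rle_trans. apply Rabs_triang. apply Rplus_le_compat; auto.
Qed.

Lemma S2_dom a b B : (forall m n, Rabs (a m n) <= b m n) -> (forall N, S2 N b <= B) ->
  ex_finite_lim_seq (fun N => S2 N b) /\ ex_finite_lim_seq (fun N => S2 N a) /\
  (forall N, S2 N b <= LimR (fun N => S2 N b)) /\
  (forall N, Rabs (LimR (fun N => S2 N a) - S2 N a) <= LimR (fun N => S2 N b) - S2 N b).
Proof.
  intros H HB. apply dom_seq with B; auto.
  intros N. rewrite !S2_S. replace (S2 N a + Delta N a - S2 N a) with (Delta N a) by ring.
  replace (S2 N b + Delta N b - S2 N b) with (Delta N b) by ring. apply Delta_abs; auto.
Qed.

Lemma S2_filterlim {T} (F : (T -> Prop) -> Prop) {FF : Filter F} N (f : T -> Z -> Z -> R) g :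
  (forall m n, filterlim (fun s => f s m n) F (locally (g m n))) ->
  filterlim (fun s => S2 N (f s)) F (locally (S2 N g)).
Proof.
  intros H. unfold S2. apply zs_filterlim; auto. intros m. apply zs_filterlim; auto.
Qed.

Lemma S2_dct {T} (F : (T -> Prop) -> Prop) {FF : Filter F} (a : T -> Z -> Z -> R) a0 b B :
  F (fun s => forall m n, Rabs (a s m n) <= b m n) ->
  (forall m n, Rabs (a0 m n) <= b m n) ->
  (forall N, S2 N b <= B) ->
  (forall m n, filterlim (fun s => a s m n) F (locally (a0 m n))) ->
  filterlim (fun s => LimR (fun N => S2 N (a s))) F (locally (LimR (fun N => S2 N a0))).
Proof.
  intros Hev H0 HB Hlim.
  apply lim_R_iff; auto. intros eps He.
  destruct (S2_dom a0 b B H0 HB) as [Hb [Ha0 [HbL Ha0L]]].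
  assert (Hlb := fin_lim _ Hb).
  destruct (Hlb (fun r => Rabs (r - LimR (fun N => S2 N b)) < eps / 3)) as [N0 HN0].
  { exists (mkposreal (eps/3) ltac:(lra)). intros r Hr. apply ball_R in Hr. exact Hr. }
  specialize (HN0 N0 (le_n _)).
  assert (HF := S2_filterlim F N0 a a0 Hlim).
  rewrite lim_R_iff in HF. specialize (HF (eps/3) ltac:(lra)).
  eapply filter_imp; [| apply filter_and; [exact Hev | exact HF]].
  intros s [Hs1 Hs2].
  destruct (S2_dom (a s) b B Hs1 HB) as [_ [_ [_ HaL]]].
  specialize (HaL N0). specialize (Ha0L N0). specialize (HbL N0).
  rewrite Rabs_minus_sym in HN0. rewrite Rabs_right in HN0 by lra.
  replace (LimR (fun N => S2 N (a s)) - LimR (fun N => S2 N a0)) with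
    ((LimR (fun N => S2 N (a s)) - S2 N0 (a s)) + (S2 N0 (a s) - S2 N0 a0) - (LimR (fun N => S2 N a0) - S2 N0 a0)) by ring.
  eapply Rle_lt_trans. apply Rabs_triang.
  eapply Rle_lt_trans. apply Rplus_le_compat_r. apply Rabs_triang.
  rewrite Rabs_Ropp. lra.
  exact FF.
Qed.

Lemma atan_mvt u v : u <= v -> exists c, u <= c <= v /\ atan v - atan u = (v - u) / (1 + c * c).
Proof.
  intros H. destruct (Req_dec u v) as [->|Hne].
  - exists v. split. lra. replace (v - v) with 0 by ring. unfold Rdiv. ring.
  - destruct (MVT_cor2 atan (fun x => / (1 + x ^ 2)) u v) as [c [Hc1 Hc2]]. lra.
    intros; apply derivable_pt_lim_atan.
    exists c. split. lra. rewrite Hc1. unfold Rdiv. replace (c ^ 2) with (c * c) by ring. ring.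
Qed.

Lemma atan_lo u v : 0 <= u <= v -> (v - u) / (1 + v * v) <= atan v - atan u.
Proof.
  intros H. destruct (atan_mvt u v) as [c [Hc E]]. lra. rewrite E.
  unfold Rdiv. apply Rmult_le_compat_l. lra. apply Rinv_le_contravar. nra. nra.
Qed.

Lemma atan_hi u v : 0 <= u <= v -> atan v - atan u <= (v - u) / (1 + u * u).
Proof.
  intros H. destruct (atan_mvt u v) as [c [Hc E]]. lra. rewrite E.
  unfold Rdiv. apply Rmult_le_compat_l. lra. apply Rinv_le_contravar. nra. nra.
Qed.

Lemma atan_mono u v : u <= v -> atan u <= atan v.
Proof. intros H. destruct (Req_dec u v) as [->|]. lra. left; apply atan_increasing; lra. Qed.

Lemma atan0 : atan 0 = 0.
Proof. pose proof (atan_opp 0). rewrite Ropp_0 in H. lra. Qed.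

Lemma atan_le_id u : 0 <= u -> atan u <= u.
Proof. intros H. pose proof (atan_hi 0 u). rewrite atan0 in H0. 
  assert ((u - 0) / (1 + 0 * 0) = u) by (unfold Rdiv; field). lra. Qed.

Lemma atan_ge_big T : 0 < T -> PI / 2 - / T <= atan T.
Proof.
  intros H. pose proof (atan_inv T H). pose proof (atan_le_id (/ T)).
  assert (0 < / T) by (apply Rinv_0_lt_compat; auto). lra.
Qed.

Definition Ab (b t : R) := atan (t / b) / b.
Definition Abar b t := Ab b (Rmax t 0).
Definition Ahat b t := Ab b (Rmin t 0).
Definition Qf (c t : R) := if Rlt_dec c t then 1 else 0.

Lemma Ab_lo b u v : 0 < b -> 0 <= u <= v -> (v - u) / (b * b + v * v) <= Ab b v - Ab b u.
Proof.
  intros Hb H. unfold Ab. 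
  assert (H1 := atan_lo (u / b) (v / b)).
  assert (0 <= u / b <= v / b). { split; unfold Rdiv; apply Rmult_le_compat_r || apply Rmult_le_pos; try lra;
     left; apply Rinv_0_lt_compat; auto. }
  specialize (H1 H0).
  replace ((v - u) / (b * b + v * v)) with ((v / b - u / b) / (1 + v / b * (v / b)) / b) by (field; split; nra).
  replace (atan (v / b) / b - atan (u / b) / b) with ((atan (v / b) - atan (u / b)) / b) by (field; lra).
  unfold Rdiv at 1 3. apply Rmult_le_compat_r. left; apply Rinv_0_lt_compat; auto. exact H1.
Qed.

Lemma Ab_hi b u v : 0 < b -> 0 <= u <= v -> Ab b v - Ab b u <= (v - u) / (b * b + u * u).
Proof.
  intros Hb H. unfold Ab. 
  assert (H1 := atan_hi (u / b) (v / b)).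
  assert (0 <= u / b <= v / b). { split; unfold Rdiv; apply Rmult_le_compat_r || apply Rmult_le_pos; try lra;
     left; apply Rinv_0_lt_compat; auto. }
  specialize (H1 H0).
  replace ((v - u) / (b * b + u * u)) with ((v / b - u / b) / (1 + u / b * (u / b)) / b) by (field; split; nra).
  replace (atan (v / b) / b - atan (u / b) / b) with ((atan (v / b) - atan (u / b)) / b) by (field; lra).
  unfold Rdiv at 1 3. apply Rmult_le_compat_r. left; apply Rinv_0_lt_compat; auto. exact H1.
Qed.

Lemma Ab_opp b u : Ab b (- u) = - Ab b u.
Proof. unfold Ab. replace (- u / b) with (- (u / b)) by (unfold Rdiv; ring). rewrite atan_opp. unfold Rdiv; ring. Qed.

Lemma Ab_mono b u v : 0 < b -> u <= v -> Ab b u <= Ab b v.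
Proof. intros Hb H. unfold Ab, Rdiv. apply Rmult_le_compat_r. left; apply Rinv_0_lt_compat; auto.
  apply atan_mono. apply Rmult_le_compat_r; auto. left; apply Rinv_0_lt_compat; auto. Qed.

Lemma Ab_bound b u : 0 < b -> - PI / (2 * b) < Ab b u < PI / (2 * b).
Proof.
  intros Hb. unfold Ab. pose proof (atan_bound (u / b)).
  replace (- PI / (2 * b)) with ((- PI / 2) / b) by (field; lra).
  replace (PI / (2 * b)) with ((PI / 2) / b) by (field; lra).
  split; apply Rmult_lt_compat_r; try (apply Rinv_0_lt_compat; auto); lra.
Qed.

Lemma Ab0 b : Ab b 0 = 0.
Proof. unfold Ab. unfold Rdiv. rewrite Rmult_0_l, atan0. ring. Qed.

Lemma Ab_small b u : 0 < b -> 0 <= u -> Ab b u <= u / (b * b).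
Proof.
  intros Hb Hu. pose proof (Ab_hi b 0 u Hb (conj (Rle_refl 0) Hu)). rewrite Ab0 in H.
  replace ((u - 0) / (b * b + 0 * 0)) with (u / (b * b)) in H by (field; lra). lra.
Qed.

Lemma Qf_mono c u v : u <= v -> Qf c u <= Qf c v.
Proof. intros H. unfold Qf. destruct (Rlt_dec c u); destruct (Rlt_dec c v); lra. Qed.

Lemma Qf_bound c u : 0 <= Qf c u <= 1.
Proof. unfold Qf. destruct (Rlt_dec c u); lra. Qed.

Lemma tele_row X d N (K : R -> R) :
  zs N (fun n => K (X + d * IZR n + d) - K (X + d * IZR n)) =
  K (X + d * IZR (Z.of_nat N) + d) - K (X + d * IZR (- Z.of_nat N)).
Proof.
  transitivity (zs N (fun k => K (X + d * IZR (k + 1)) - K (X + d * IZR k))).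
  - apply zs_ext. intros k _. rewrite plus_IZR. f_equal. f_equal. simpl. ring.
  - rewrite (zs_tele N (fun k => K (X + d * IZR k))). rewrite plus_IZR. f_equal. f_equal. simpl. ring.
Qed.

Lemma tele_row_le X d N (K : R -> R) lo hi : (forall u, lo <= K u <= hi) ->
  zs N (fun n => K (X + d * IZR n + d) - K (X + d * IZR n)) <= hi - lo.
Proof.
  intros H. rewrite tele_row. pose proof (H (X + d * IZR (Z.of_nat N) + d)).
  pose proof (H (X + d * IZR (- Z.of_nat N))). lra.
Qed.

Definition qq (d t : R) := (Qf (- d) t - Qf (- d) (t - d)) + (Qf 0 t - Qf 0 (t - d)).

Lemma qq_nonneg d t : 0 < d -> 0 <= qq d t.
Proof. intros Hd. unfold qq. pose proof (Qf_mono (-d) (t - d) t). pose proof (Qf_mono 0 (t - d) t). lra. Qed.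

Lemma qq_one d t : 0 < d -> - d < t < d -> 1 <= qq d t.
Proof.
  intros Hd Ht. unfold qq, Qf.
  destruct (Rlt_dec (-d) t); destruct (Rlt_dec (-d) (t - d)); destruct (Rlt_dec 0 t); destruct (Rlt_dec 0 (t - d)); lra.
Qed.

Lemma Abar_nonneg b u : 0 < b -> 0 <= Abar b u.
Proof. intros Hb. unfold Abar. pose proof (Ab_mono b 0 (Rmax u 0) Hb (Rmax_r u 0)). rewrite Ab0 in H. exact H. Qed.

Lemma Ahat_nonpos b u : 0 < b -> Ahat b u <= 0.
Proof. intros Hb. unfold Ahat. pose proof (Ab_mono b (Rmin u 0) 0 Hb (Rmin_r u 0)). rewrite Ab0 in H. exact H. Qed.

Lemma Abar_mono b u v : 0 < b -> u <= v -> Abar b u <= Abar b v.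
Proof. intros Hb H. unfold Abar. apply Ab_mono; auto. unfold Rmax. destruct (Rle_dec u 0); destruct (Rle_dec v 0); lra. Qed.

Lemma Ahat_mono b u v : 0 < b -> u <= v -> Ahat b u <= Ahat b v.
Proof. intros Hb H. unfold Ahat. apply Ab_mono; auto. unfold Rmin. destruct (Rle_dec u 0); destruct (Rle_dec v 0); lra. Qed.

Lemma f_le_b b t : 0 < b -> / (b * b + t * t) <= / (b * b).
Proof. intros Hb. apply Rinv_le_contravar. nra. pose proof (Rle_0_sqr t). unfold Rsqr in H. lra. Qed.

Lemma row_term_up b d t : 0 < b -> 0 < d ->
  d * / (b * b + t * t) <= (Abar b (t + d - d) - Abar b (t - d)) + (Ahat b (t + d) - Ahat b t)
     + d / (b * b) * qq d t.
Proof.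
  intros Hb Hd. replace (t + d - d) with t by ring.
  assert (Hq := qq_nonneg d t Hd).
  assert (HA1 := Abar_mono b (t - d) t Hb ltac:(lra)).
  assert (HA2 := Ahat_mono b t (t + d) Hb ltac:(lra)).
  assert (Hbb : 0 < b * b) by nra.
  assert (Hdb : 0 <= d / (b * b)) by (apply Rlt_le, Rdiv_lt_0_compat; auto).
  destruct (Rle_dec d t) as [H1|H1].
  - unfold Abar. rewrite (Rmax_left t 0) by lra. rewrite (Rmax_left (t - d) 0) by lra.
    pose proof (Ab_lo b (t - d) t Hb ltac:(lra)).
    replace ((t - (t - d)) / (b * b + t * t)) with (d * / (b * b + t * t)) in H by (unfold Rdiv; ring).
    assert (0 <= d / (b * b) * qq d t) by (apply Rmult_le_pos; auto). lra.
  - destruct (Rle_dec t (- d)) as [H2|H2].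
    + unfold Ahat. rewrite (Rmin_left t 0) by lra. rewrite (Rmin_left (t + d) 0) by lra.
      pose proof (Ab_lo b (- t - d) (- t) Hb ltac:(lra)).
      replace (- t - d) with (- (t + d)) in H by ring. rewrite !Ab_opp in H.
      replace ((- t - - (t + d)) / (b * b + - t * - t)) with (d * / (b * b + t * t)) in H by (field; nra).
      assert (0 <= d / (b * b) * qq d t) by (apply Rmult_le_pos; auto). lra.
    + assert (Hq1 := qq_one d t Hd ltac:(lra)).
      assert (d * / (b * b + t * t) <= d / (b * b)).
      { unfold Rdiv. apply Rmult_le_compat_l. lra. apply f_le_b; auto. }
      assert (d / (b * b) <= d / (b * b) * qq d t).
      { rewrite <- (Rmult_1_r (d / (b * b))) at 1. apply Rmult_le_compat_l; auto. }
      lra.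
Qed.

Lemma row_term_lo b d t : 0 < b -> 0 < d ->
  (Abar b (t + d) - Abar b t) + (Ahat b (t + d - d) - Ahat b (t - d)) - d / (b * b) * qq d t
    <= d * / (b * b + t * t).
Proof.
  intros Hb Hd. replace (t + d - d) with t by ring.
  assert (Hq := qq_nonneg d t Hd).
  assert (Hbb : 0 < b * b) by nra.
  assert (Hdb : 0 <= d / (b * b)) by (apply Rlt_le, Rdiv_lt_0_compat; auto).
  assert (Hf : 0 <= d * / (b * b + t * t)). { apply Rmult_le_pos. lra. left; apply Rinv_0_lt_compat. 
     pose proof (Rle_0_sqr t). unfold Rsqr in H. lra. }
  destruct (Rle_dec 0 t) as [H1|H1].
  - unfold Abar. rewrite (Rmax_left t 0) by lra. rewrite (Rmax_left (t + d) 0) by lra.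
    pose proof (Ab_hi b t (t + d) Hb ltac:(lra)).
    replace ((t + d - t) / (b * b + t * t)) with (d * / (b * b + t * t)) in H by (unfold Rdiv; ring).
    destruct (Rle_dec d t) as [H2|H2].
    + unfold Ahat. rewrite (Rmin_right t 0) by lra. rewrite (Rmin_right (t - d) 0) by lra.
      assert (0 <= d / (b * b) * qq d t) by (apply Rmult_le_pos; auto). lra.
    + unfold Ahat. rewrite (Rmin_right t 0) by lra. rewrite (Rmin_left (t - d) 0) by lra.
      rewrite Ab0. replace (t - d) with (- (d - t)) by ring. rewrite Ab_opp.
      pose proof (Ab_small b (d - t) Hb ltac:(lra)).
      assert (Hq1 := qq_one d t Hd ltac:(lra)).
      assert ((d - t) / (b * b) <= d / (b * b) * qq d t).
      { apply (Rle_trans _ (d / (b * b))). unfold Rdiv. apply Rmult_le_compat_r. left; apply Rinv_0_lt_compat; auto. lra.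
        rewrite <- (Rmult_1_r (d / (b * b))) at 1. apply Rmult_le_compat_l; auto. }
      lra.
  - unfold Ahat. rewrite (Rmin_left t 0) by lra. rewrite (Rmin_left (t - d) 0) by lra.
    pose proof (Ab_hi b (- t) (d - t) Hb ltac:(lra)).
    replace (d - t) with (- (t - d)) in H by ring. rewrite !Ab_opp in H.
    replace ((- (t - d) - - t) / (b * b + - t * - t)) with (d * / (b * b + t * t)) in H by (field; nra).
    destruct (Rle_dec (t + d) 0) as [H2|H2].
    + unfold Abar. rewrite (Rmax_right t 0) by lra. rewrite (Rmax_right (t + d) 0) by lra.
      assert (0 <= d / (b * b) * qq d t) by (apply Rmult_le_pos; auto). lra.
    + unfold Abar. rewrite (Rmax_right t 0) by lra. rewrite (Rmax_left (t + d) 0) by lra.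
      rewrite Ab0. pose proof (Ab_small b (t + d) Hb ltac:(lra)).
      assert (Hq1 := qq_one d t Hd ltac:(lra)).
      assert ((t + d) / (b * b) <= d / (b * b) * qq d t).
      { apply (Rle_trans _ (d / (b * b))). unfold Rdiv. apply Rmult_le_compat_r. left; apply Rinv_0_lt_compat; auto. lra.
        rewrite <- (Rmult_1_r (d / (b * b))) at 1. apply Rmult_le_compat_l; auto. }
      lra.
Qed.

Lemma qq_sum d X N : 0 < d -> zs N (fun n => qq d (X + d * IZR n)) <= 2.
Proof.
  intros Hd.
  rewrite (zs_ext N _ (fun n => ((fun u => Qf (-d) (u - d)) (X + d * IZR n + d) - (fun u => Qf (-d) (u - d)) (X + d * IZR n))
     + ((fun u => Qf 0 (u - d)) (X + d * IZR n + d) - (fun u => Qf 0 (u - d)) (X + d * IZR n)))).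
  2:{ intros k _. unfold qq. replace (X + d * IZR k + d - d) with (X + d * IZR k) by ring. reflexivity. }
  rewrite zs_plus.
  assert (H1 := tele_row_le X d N (fun u => Qf (-d) (u - d)) 0 1 (fun u => Qf_bound _ _)).
  assert (H2 := tele_row_le X d N (fun u => Qf 0 (u - d)) 0 1 (fun u => Qf_bound _ _)).
  lra.
Qed.

Lemma row_upper b d X N : 0 < b -> 0 < d ->
  zs N (fun n => / (b * b + (X + d * IZR n) * (X + d * IZR n))) <= PI / (d * b) + 2 / (b * b).
Proof.
  intros Hb Hd.
  apply (Rmult_le_reg_l d); auto. rewrite <- zs_scal.
  eapply Rle_trans. apply zs_le. intros k _. apply row_term_up; auto.
  rewrite !zs_plus. rewrite zs_scal.
  assert (H1 := tele_row_le X d N (fun u => Abar b (u - d)) 0 (PI / (2 * b))).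
  assert (H2 := tele_row_le X d N (fun u => Ahat b u) (- (PI / (2 * b))) 0).
  assert (H3 := qq_sum d X N Hd).
  assert (Hb1 : forall u, 0 <= Abar b u <= PI / (2 * b)).
  { intros u. split. apply Abar_nonneg; auto. unfold Abar. pose proof (Ab_bound b (Rmax u 0) Hb). lra. }
  assert (Hb2 : forall u, - (PI / (2 * b)) <= Ahat b u <= 0).
  { intros u. split. unfold Ahat. pose proof (Ab_bound b (Rmin u 0) Hb). 
    replace (- (PI / (2 * b))) with (- PI / (2 * b)) by (field; lra). lra. apply Ahat_nonpos; auto. }
  specialize (H1 (fun u => Hb1 (u - d))). specialize (H2 Hb2).
  assert (Hbb : 0 < b * b) by nra.
  assert (d / (b * b) * zs N (fun n => qq d (X + d * IZR n)) <= d / (b * b) * 2).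
  { apply Rmult_le_compat_l; auto. apply Rlt_le, Rdiv_lt_0_compat; auto. }
  replace (d * (PI / (d * b) + 2 / (b * b))) with (PI / (2 * b) - 0 + (0 - - (PI / (2 * b))) + d / (b * b) * 2) by (field; lra).
  lra.
Qed.

Lemma row_lower b d X N Kc : 0 < b -> 0 < d -> 0 < Kc ->
  Kc <= X + d * IZR (Z.of_nat N) -> X + d * IZR (- Z.of_nat N) <= - Kc ->
  PI / (d * b) - 2 / (d * Kc) - 2 / (b * b) <=
  zs N (fun n => / (b * b + (X + d * IZR n) * (X + d * IZR n))).
Proof.
  intros Hb Hd HK H1 H2.
  apply (Rmult_le_reg_l d); auto. rewrite <- zs_scal.
  eapply Rle_trans. 2:{ apply zs_le. intros k _. apply row_term_lo; auto. }
  rewrite !zs_minus, !zs_plus. rewrite zs_scal.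
  rewrite (tele_row X d N (fun u => Abar b u)).
  rewrite (tele_row X d N (fun u => Ahat b (u - d))).
  assert (H3 := qq_sum d X N Hd).
  assert (Hbb : 0 < b * b) by nra.
  assert (d / (b * b) * zs N (fun n => qq d (X + d * IZR n)) <= d / (b * b) * 2).
  { apply Rmult_le_compat_l; auto. apply Rlt_le, Rdiv_lt_0_compat; auto. }
  assert (E1 : Abar b (X + d * IZR (- Z.of_nat N)) = 0).
  { unfold Abar. rewrite Rmax_right by lra. apply Ab0. }
  assert (E2 : Ahat b (X + d * IZR (Z.of_nat N) + d - d) = 0).
  { unfold Ahat. rewrite Rmin_right by lra. apply Ab0. }
  assert (L1 : PI / (2 * b) - / Kc <= Abar b (X + d * IZR (Z.of_nat N) + d)).
  { unfold Abar. rewrite Rmax_left by lra. eapply Rle_trans. 2:{ apply Ab_mono; auto. 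
      instantiate (1 := Kc). lra. }
    unfold Ab. pose proof (atan_ge_big (Kc / b) ltac:(apply Rdiv_lt_0_compat; auto)).
    replace (PI / (2 * b) - / Kc) with ((PI / 2 - / (Kc / b)) / b) by (field; lra).
    unfold Rdiv at 1 3. apply Rmult_le_compat_r. left; apply Rinv_0_lt_compat; auto. exact H0. }
  assert (L2 : Ahat b (X + d * IZR (- Z.of_nat N) - d) <= - (PI / (2 * b) - / Kc)).
  { unfold Ahat. rewrite Rmin_left by lra. eapply Rle_trans. apply Ab_mono; auto.
      instantiate (1 := - Kc). lra. rewrite Ab_opp.
    unfold Ab. pose proof (atan_ge_big (Kc / b) ltac:(apply Rdiv_lt_0_compat; auto)).
    replace (PI / (2 * b) - / Kc) with ((PI / 2 - / (Kc / b)) / b) by (field; lra).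
    apply Ropp_le_contravar. unfold Rdiv at 1 3. apply Rmult_le_compat_r. left; apply Rinv_0_lt_compat; auto. exact H0. }
  replace (d * (PI / (d * b) - 2 / (d * Kc) - 2 / (b * b))) with
    ((PI / (2 * b) - / Kc) + (PI / (2 * b) - / Kc) - d / (b * b) * 2) by (field; lra).
  lra.
Qed.

Definition Ttail T t := if Rlt_dec T (Rabs t) then / (t * t) else 0.

Lemma tail_term T d t : 0 < d -> d < T ->
  d * Ttail T t <= ((- / Rmax (t + d - d) (T - d)) - (- / Rmax (t - d) (T - d)))
                 + (/ Rmax (- (t + d)) (T - d) - / Rmax (- t) (T - d)).
Proof.
  intros Hd HT. replace (t + d - d) with t by ring.
  assert (M1 : forall u v, u <= v -> / Rmax u (T - d) <= / Rmax v (T - d) -> True) by auto.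
  assert (Hmono : forall u v, u <= v -> / Rmax v (T - d) <= / Rmax u (T - d)).
  { intros u v Huv. apply Rinv_le_contravar. unfold Rmax; destruct (Rle_dec u (T - d)); lra.
    unfold Rmax; destruct (Rle_dec u (T - d)); destruct (Rle_dec v (T - d)); lra. }
  assert (B1 := Hmono (t - d) t ltac:(lra)).
  assert (B2 := Hmono (- (t + d)) (- t) ltac:(lra)).
  unfold Ttail. destruct (Rlt_dec T (Rabs t)) as [Ht|Ht].
  - destruct (Rle_dec 0 t) as [Hp|Hp].
    + rewrite Rabs_right in Ht by lra.
      rewrite (Rmax_left t) by lra. rewrite (Rmax_left (t - d)) by lra.
      assert (/ t - / (t - d) <= 0 -> True) by auto.
      assert (d * / (t * t) <= / (t - d) - / t).
      { replace (/ (t - d) - / t) with (d * / (t * (t - d))) by (field; lra).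
        apply Rmult_le_compat_l. lra. apply Rinv_le_contravar. nra. nra. }
      lra.
    + rewrite Rabs_left in Ht by lra.
      rewrite (Rmax_left (- t)) by lra. rewrite (Rmax_left (- (t + d))) by lra.
      assert (d * / (t * t) <= / (- (t + d)) - / (- t)).
      { replace (/ (- (t + d)) - / (- t)) with (d * / (t * (t + d))) by (field; lra).
        apply Rmult_le_compat_l. lra. apply Rinv_le_contravar. nra. nra. }
      lra.
  - lra.
Qed.

Lemma row_tail T d X N : 0 < d -> d < T ->
  zs N (fun n => Ttail T (X + d * IZR n)) <= 2 / (d * (T - d)).
Proof.
  intros Hd HT. apply (Rmult_le_reg_l d); auto. rewrite <- zs_scal.
  eapply Rle_trans. apply zs_le. intros k _. apply tail_term; auto.
  rewrite zs_plus.
  assert (Hr : forall u, 0 < Rmax u (T - d)) by (intros; unfold Rmax; destruct (Rle_dec u (T - d)); lra).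
  assert (Hb : forall u, / Rmax u (T - d) <= / (T - d)).
  { intros u. apply Rinv_le_contravar. lra. apply Rmax_r. }
  assert (Hp : forall u, 0 <= / Rmax u (T - d)) by (intros; left; apply Rinv_0_lt_compat; auto).
  assert (H1 := tele_row_le X d N (fun u => - / Rmax (u - d) (T - d)) (- / (T - d)) 0).
  assert (H2 := tele_row_le X d N (fun u => / Rmax (- u) (T - d)) 0 (/ (T - d))).
  assert (X1 : forall u, - / (T - d) <= - / Rmax (u - d) (T - d) <= 0).
  { intros u. pose proof (Hb (u - d)). pose proof (Hp (u - d)). lra. }
  assert (X2 : forall u, 0 <= / Rmax (- u) (T - d) <= / (T - d)).
  { intros u. pose proof (Hb (- u)). pose proof (Hp (- u)). lra. }
  specialize (H1 X1). specialize (H2 X2).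
  replace (d * (2 / (d * (T - d)))) with (0 - - / (T - d) + (/ (T - d) - 0)) by (field; lra).
  lra.
Qed.

Lemma Rpow_anti a b q : 0 < a <= b -> q <= 0 -> Rpower b q <= Rpower a q.
Proof.
  intros Hab Hq. replace q with (- (- q)) by ring. rewrite (Rpower_Ropp b (- q)), (Rpower_Ropp a (- q)).
  apply Rinv_le_contravar. apply Rpower_pos. apply Rle_Rpower_l; lra.
Qed.

Lemma pow_mvt s u v : 0 < s -> 0 < u <= v ->
  2 * s * (v - u) * Rpower v (-1 - 2 * s) <= Rpower u (- 2 * s) - Rpower v (- 2 * s) <=
  2 * s * (v - u) * Rpower u (-1 - 2 * s).
Proof.
  intros Hs Huv. destruct (Req_dec u v) as [->|Hne].
  - replace (v - v) with 0 by ring. lra.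
  - destruct (MVT_cor2 (fun x => Rpower x (-2 * s)) (fun x => (-2 * s) * Rpower x (-2 * s - 1)) u v) as [c [Hc1 Hc2]].
    lra. intros c Hc. apply derivable_pt_lim_power. lra.
    replace (-2 * s - 1) with (-1 - 2 * s) in Hc1 by ring.
    assert (H1 : Rpower v (-1 - 2 * s) <= Rpower c (-1 - 2 * s)) by (apply Rpow_anti; lra).
    assert (H2 : Rpower c (-1 - 2 * s) <= Rpower u (-1 - 2 * s)) by (apply Rpow_anti; lra).
    replace (Rpower u (- 2 * s) - Rpower v (- 2 * s)) with (- (Rpower v (-2 * s) - Rpower u (-2 * s))) by ring.
    rewrite Hc1. split.
    + replace (- (-2 * s * Rpower c (-1 - 2 * s) * (v - u))) with (2 * s * (v - u) * Rpower c (-1 - 2 * s)) by ring.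
      apply Rmult_le_compat_l; nra.
    + replace (- (-2 * s * Rpower c (-1 - 2 * s) * (v - u))) with (2 * s * (v - u) * Rpower c (-1 - 2 * s)) by ring.
      apply Rmult_le_compat_l; nra.
Qed.

Definition wpos s (c : Z) := if Z_lt_dec 0 c then Rpower (IZR c) (-1 - 2 * s) else 0.
Definition Pm s u := Rpower (Rmax u 1) (- 2 * s).

Lemma Pm_bound s u : 0 < s -> 0 < Pm s u <= 1.
Proof.
  intros Hs. split. apply Rpower_pos. unfold Pm.
  assert (Rpower (Rmax u 1) (- 2 * s) <= Rpower 1 (-2 * s)) by (apply Rpow_anti; try lra; split; [lra | apply Rmax_r]).
  unfold Rpower at 2 in H. rewrite ln_1, Rmult_0_r, exp_0 in H. exact H.
Qed.

Lemma Pm_anti s u v : 0 < s -> u <= v -> Pm s v <= Pm s u.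
Proof. intros Hs H. unfold Pm. apply Rpow_anti. split. apply (Rlt_le_trans _ 1). lra. apply Rmax_r.
  unfold Rmax. destruct (Rle_dec u 1); destruct (Rle_dec v 1); lra. lra. Qed.

Lemma wpos_term s (D c : Z) : 0 < s -> (1 <= D)%Z ->
  2 * s * IZR D * wpos s c <= ((- Pm s (IZR c + IZR D - IZR D)) - (- Pm s (IZR c - IZR D)))
     + 2 * s * IZR D * ((Qf 0 (IZR c + IZR D - IZR D)) - Qf 0 (IZR c - IZR D)).
Proof.
  intros Hs HD. replace (IZR c + IZR D - IZR D) with (IZR c) by ring.
  assert (HDr : 1 <= IZR D) by (apply IZR_le; lia).
  assert (Hm := Pm_anti s (IZR c - IZR D) (IZR c) Hs ltac:(lra)).
  assert (Hq := Qf_mono 0 (IZR c - IZR D) (IZR c) ltac:(lra)).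
  assert (Hsd : 0 <= 2 * s * IZR D) by nra.
  unfold wpos. destruct (Z_lt_dec 0 c) as [Hc|Hc].
  - destruct (Z_le_dec 1 (c - D)) as [H1|H1].
    + assert (E : IZR c - IZR D = IZR (c - D)) by (rewrite minus_IZR; ring).
      assert (1 <= IZR (c - D)) by (apply IZR_le; lia).
      unfold Pm. rewrite Rmax_left by lra. rewrite Rmax_left by lra.
      destruct (pow_mvt s (IZR c - IZR D) (IZR c) Hs ltac:(lra)) as [P1 _].
      replace (IZR c - (IZR c - IZR D)) with (IZR D) in P1 by ring.
      assert (0 <= 2 * s * IZR D * (Qf 0 (IZR c) - Qf 0 (IZR c - IZR D))) by (apply Rmult_le_pos; lra).
      lra.
    + assert (IZR c - IZR D <= 0) by (rewrite <- minus_IZR; apply IZR_le; lia).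
      assert (1 <= IZR c) by (apply IZR_le; lia).
      assert (Q1 : Qf 0 (IZR c) = 1) by (unfold Qf; destruct (Rlt_dec 0 (IZR c)); lra).
      assert (Q2 : Qf 0 (IZR c - IZR D) = 0) by (unfold Qf; destruct (Rlt_dec 0 (IZR c - IZR D)); lra).
      assert (Q3 : Rpower (IZR c) (-1 - 2 * s) <= Rpower 1 (-1 - 2 * s)) by (apply Rpow_anti; lra).
      unfold Rpower at 2 in Q3. rewrite ln_1, Rmult_0_r, exp_0 in Q3.
      rewrite Q1, Q2. nra.
  - assert (0 <= 2 * s * IZR D * (Qf 0 (IZR c) - Qf 0 (IZR c - IZR D))) by (apply Rmult_le_pos; lra).
    lra.
Qed.

Lemma wpos_sum s a1 D N : 0 < s -> (1 <= D)%Z ->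
  s * zs N (fun m => wpos s (a1 + D * m)) <= / (2 * IZR D) + s.
Proof.
  intros Hs HD. assert (HDr : 1 <= IZR D) by (apply IZR_le; lia).
  apply (Rmult_le_reg_l (2 * IZR D)). lra.
  replace (2 * IZR D * (s * zs N (fun m => wpos s (a1 + D * m)))) with (zs N (fun m => 2 * s * IZR D * wpos s (a1 + D * m))) by (rewrite zs_scal; ring).
  eapply Rle_trans. apply zs_le. intros k _. apply (wpos_term s D (a1 + D * k)); auto.
  rewrite zs_plus, zs_scal.
  rewrite (zs_ext N _ (fun n => (fun u => - Pm s (u - IZR D)) (IZR a1 + IZR D * IZR n + IZR D) - (fun u => - Pm s (u - IZR D)) (IZR a1 + IZR D * IZR n))).
  2:{ intros k _. rewrite plus_IZR, mult_IZR. reflexivity. }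
  rewrite (zs_ext N (fun x => Qf 0 (IZR (a1 + D * x) + IZR D - IZR D) - Qf 0 (IZR (a1 + D * x) - IZR D))
     (fun n => (fun u => Qf 0 (u - IZR D)) (IZR a1 + IZR D * IZR n + IZR D) - (fun u => Qf 0 (u - IZR D)) (IZR a1 + IZR D * IZR n))).
  2:{ intros k _. rewrite plus_IZR, mult_IZR. reflexivity. }
  assert (H1 := tele_row_le (IZR a1) (IZR D) N (fun u => - Pm s (u - IZR D)) (-1) 0).
  assert (H2 := tele_row_le (IZR a1) (IZR D) N (fun u => Qf 0 (u - IZR D)) 0 1 (fun u => Qf_bound _ _)).
  assert (X1 : forall u, -1 <= - Pm s (u - IZR D) <= 0) by (intros u; pose proof (Pm_bound s (u - IZR D) Hs); lra).
  specialize (H1 X1).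
  assert (2 * s * IZR D * zs N (fun n => Qf 0 (IZR a1 + IZR D * IZR n + IZR D - IZR D) - Qf 0 (IZR a1 + IZR D * IZR n - IZR D)) <= 2 * s * IZR D * 1).
  { apply Rmult_le_compat_l. nra. lra. }
  replace (2 * IZR D * (/ (2 * IZR D) + s)) with (0 - -1 + 2 * s * IZR D * 1) by (field; lra).
  lra.
Qed.

Definition wge s c0 (c : Z) := if Rle_dec c0 (IZR c) then Rpower (IZR c) (-1 - 2 * s) else 0.
Definition P0 s c0 u := Rpower (Rmax u c0) (- 2 * s).

Lemma wge_term s d c0 t : 0 < s -> 0 < d -> 1 <= c0 ->
  - (P0 s c0 (t + d) - P0 s c0 t)
   - (Rpower c0 (-2 * s) - Rpower (c0 + d) (-2 * s)) * (Qf (c0 - d) (t + d - d) - Qf (c0 - d) (t - d))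
  <= 2 * s * d * (if Rle_dec c0 t then Rpower t (-1 - 2 * s) else 0).
Proof.
  intros Hs Hd Hc0. replace (t + d - d) with t by ring.
  assert (He : 0 <= Rpower c0 (-2 * s) - Rpower (c0 + d) (-2 * s)).
  { assert (Rpower (c0 + d) (-2 * s) <= Rpower c0 (-2 * s)) by (apply Rpow_anti; lra). lra. }
  assert (Hq := Qf_mono (c0 - d) (t - d) t ltac:(lra)).
  destruct (Rle_dec c0 t) as [H1|H1].
  - unfold P0. rewrite Rmax_left by lra. rewrite Rmax_left by lra.
    destruct (pow_mvt s t (t + d) Hs ltac:(lra)) as [_ P2].
    replace (t + d - t) with d in P2 by ring.
    assert (0 <= (Rpower c0 (-2 * s) - Rpower (c0 + d) (-2 * s)) * (Qf (c0 - d) t - Qf (c0 - d) (t - d))) by (apply Rmult_le_pos; lra).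
    nra.
  - unfold P0. rewrite (Rmax_right t c0) by lra.
    destruct (Rle_dec (t + d) c0) as [H2|H2].
    + rewrite (Rmax_right (t + d) c0) by lra.
      assert (0 <= (Rpower c0 (-2 * s) - Rpower (c0 + d) (-2 * s)) * (Qf (c0 - d) t - Qf (c0 - d) (t - d))) by (apply Rmult_le_pos; lra).
      lra.
    + rewrite (Rmax_left (t + d) c0) by lra.
      assert (Q1 : Qf (c0 - d) t = 1) by (unfold Qf; destruct (Rlt_dec (c0 - d) t); lra).
      assert (Q2 : Qf (c0 - d) (t - d) = 0) by (unfold Qf; destruct (Rlt_dec (c0 - d) (t - d)); lra).
      rewrite Q1, Q2.
      assert (Rpower (c0 + d) (-2 * s) <= Rpower (t + d) (-2 * s)) by (apply Rpow_anti; lra).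
      lra.
Qed.

Lemma wge_sum s a1 D N c0 : 0 < s -> (1 <= D)%Z -> 1 <= c0 ->
  IZR a1 + IZR D * IZR (- Z.of_nat N) <= c0 -> c0 <= IZR a1 + IZR D * IZR (Z.of_nat N) + IZR D ->
  (Rpower (c0 + IZR D) (- 2 * s) - Rpower (IZR a1 + IZR D * IZR (Z.of_nat N) + IZR D) (- 2 * s)) / (2 * IZR D)
  <= s * zs N (fun m => wge s c0 (a1 + D * m)).
Proof.
  intros Hs HD Hc0 H1 H2. assert (HDr : 1 <= IZR D) by (apply IZR_le; lia).
  apply (Rmult_le_reg_l (2 * IZR D)). lra.
  replace (2 * IZR D * (s * zs N (fun m => wge s c0 (a1 + D * m)))) with (zs N (fun m => 2 * s * IZR D * wge s c0 (a1 + D * m))) by (rewrite zs_scal; ring).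
  set (e := Rpower c0 (-2 * s) - Rpower (c0 + IZR D) (-2 * s)).
  eapply Rle_trans. 2:{ apply zs_le. intros k _. unfold wge.
    apply (wge_term s (IZR D) c0 (IZR (a1 + D * k))); auto. lra. }
  fold e.
  rewrite (zs_ext N (fun x => - (P0 s c0 (IZR (a1 + D * x) + IZR D) - P0 s c0 (IZR (a1 + D * x))) -
      e * (Qf (c0 - IZR D) (IZR (a1 + D * x) + IZR D - IZR D) - Qf (c0 - IZR D) (IZR (a1 + D * x) - IZR D)))
    (fun x => - (P0 s c0 (IZR a1 + IZR D * IZR x + IZR D) - P0 s c0 (IZR a1 + IZR D * IZR x)) -
      e * (Qf (c0 - IZR D) (IZR a1 + IZR D * IZR x + IZR D - IZR D) - Qf (c0 - IZR D) (IZR a1 + IZR D * IZR x - IZR D)))).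
  2:{ intros k _. rewrite plus_IZR, mult_IZR. reflexivity. } rewrite zs_minus. rewrite zs_scal.
  rewrite (zs_ext N (fun x => - (P0 s c0 (IZR a1 + IZR D * IZR x + IZR D) - P0 s c0 (IZR a1 + IZR D * IZR x)))
      (fun x => - 1 * (P0 s c0 (IZR a1 + IZR D * IZR x + IZR D) - P0 s c0 (IZR a1 + IZR D * IZR x)))) by (intros; ring).
  rewrite zs_scal. rewrite tele_row.
  assert (H3 := tele_row_le (IZR a1) (IZR D) N (fun u => Qf (c0 - IZR D) (u - IZR D)) 0 1 (fun u => Qf_bound _ _)).
  assert (He : 0 <= e).
  { unfold e. assert (Rpower (c0 + IZR D) (-2 * s) <= Rpower c0 (-2 * s)) by (apply Rpow_anti; lra). lra. }
  assert (E1 : P0 s c0 (IZR a1 + IZR D * IZR (- Z.of_nat N)) = Rpower c0 (-2 * s)).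
  { unfold P0. rewrite Rmax_right by lra. reflexivity. }
  assert (E2 : P0 s c0 (IZR a1 + IZR D * IZR (Z.of_nat N) + IZR D) = Rpower (IZR a1 + IZR D * IZR (Z.of_nat N) + IZR D) (-2 * s)).
  { unfold P0. rewrite Rmax_left by lra. reflexivity. }
  rewrite E1, E2.
  assert (e * zs N (fun n => Qf (c0 - IZR D) (IZR a1 + IZR D * IZR n + IZR D - IZR D) - Qf (c0 - IZR D) (IZR a1 + IZR D * IZR n - IZR D)) <= e * 1).
  { apply Rmult_le_compat_l; lra. }
  replace (2 * IZR D * ((Rpower (c0 + IZR D) (-2 * s) - Rpower (IZR a1 + IZR D * IZR (Z.of_nat N) + IZR D) (-2 * s)) / (2 * IZR D)))
    with (Rpower (c0 + IZR D) (-2 * s) - Rpower (IZR a1 + IZR D * IZR (Z.of_nat N) + IZR D) (-2 * s)) by (field; lra).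
  unfold e in *. lra.
Qed.

Definition tt (x : R) (a1 a2 D m n : Z) := x * IZR (a1 + D * m) + IZR (a2 + D * n).
Definition YY (y : R) (a1 D m : Z) := y * IZR (a1 + D * m).

Definition FA1 s x y a1 a2 D m n := if Z.eq_dec (a1 + D * m) 0 then 0 else A1 s (YY y a1 D m) (tt x a1 a2 D m n) (IZR D).
Definition FA2 s x y a1 a2 D m n := if Z.eq_dec (a1 + D * m) 0 then 0 else A2 s (YY y a1 D m) (tt x a1 a2 D m n) (IZR D).
Definition FT1 s x y a1 a2 D m n := if Z.eq_dec (a1 + D * m) 0 then 0 else
   (G1 s (YY y a1 D m) (tt x a1 a2 D m n + IZR D) - G1 s (YY y a1 D m) (tt x a1 a2 D m n)) / IZR D.
Definition FT2 s x y a1 a2 D m n := if Z.eq_dec (a1 + D * m) 0 then 0 else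
   (G2 s (YY y a1 D m) (tt x a1 a2 D m n + IZR D) - G2 s (YY y a1 D m) (tt x a1 a2 D m n)) / IZR D.
Definition FX s x y a1 a2 D m n := if Z.eq_dec (a1 + D * m) 0 then 0 else Pw (tt x a1 a2 D m n) (YY y a1 D m) (-1 - s).

Lemma lat_pt_eq x y a1 a2 D m n : lat_pt (x, y) a1 a2 D m n = (tt x a1 a2 D m n, YY y a1 D m).
Proof. unfold lat_pt, tt, YY, Cplus, Cmult, RtoC. simpl. f_equal; ring. Qed.

Lemma YY_nz y a1 D m : 0 < y -> (a1 + D * m)%Z <> 0%Z -> YY y a1 D m <> 0.
Proof. intros Hy Hc. unfold YY. apply Rmult_integral_contrapositive. split. lra. apply not_0_IZR; auto. Qed.

Lemma Re_term s x y a1 a2 D m n : 0 < y -> 0 <= s ->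
  Re (sigma_term s (x, y) a1 a2 D m n) =
  / (1 + s) * (FA1 s x y a1 a2 D m n + FT1 s x y a1 a2 D m n) - s / (1 + s) * FX s x y a1 a2 D m n.
Proof.
  intros Hy Hs. unfold sigma_term, FA1, FT1, FX. destruct (Z.eq_dec (a1 + D * m) 0) as [H|H].
  - simpl. field. lra.
  - rewrite lat_pt_eq. assert (HY := YY_nz y a1 D m Hy H).
    rewrite term_formula by auto. unfold Re; simpl fst.
    set (Y := YY y a1 D m). set (t := tt x a1 a2 D m n).
    replace (A1 s Y t (IZR D) + (G1 s Y (t + IZR D) - G1 s Y t) / IZR D) with (g1 s Y t).
    2:{ unfold A1. ring. }
    unfold g1. rewrite (Pw_sh t Y (-1 - s) (-2 - s)) by (auto; ring). unfold rho.
    assert (0 < rho t Y) by (apply rho_pos; auto). unfold rho in H0.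
    field. split; lra.
Qed.

Lemma Im_term s x y a1 a2 D m n : 0 < y -> 0 <= s ->
  Im (sigma_term s (x, y) a1 a2 D m n) =
  / (1 + s) * (FA2 s x y a1 a2 D m n + FT2 s x y a1 a2 D m n).
Proof.
  intros Hy Hs. unfold sigma_term, FA2, FT2. destruct (Z.eq_dec (a1 + D * m) 0) as [H|H].
  - simpl. field. lra.
  - rewrite lat_pt_eq. assert (HY := YY_nz y a1 D m Hy H).
    rewrite term_formula by auto. unfold Im; simpl snd.
    set (Y := YY y a1 D m). set (t := tt x a1 a2 D m n).
    replace (A2 s Y t (IZR D) + (G2 s Y (t + IZR D) - G2 s Y t) / IZR D) with (g2 s Y t).
    2:{ unfold A2. ring. }
    unfold g2. field. lra.
Qed.

Lemma Re_partial s z a1 a2 D N :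
  Re (sigma_partial s z a1 a2 D N) = S2 N (fun m n => Re (sigma_term s z a1 a2 D m n)).
Proof.
  unfold sigma_partial, S2. rewrite Re_sum_n.
  rewrite <- (sum_n_zs (fun m => zs N (fun n => Re (sigma_term s z a1 a2 D m n)))).
  apply sum_n_ext. intros i. rewrite Re_sum_n.
  rewrite <- (sum_n_zs (fun n => Re (sigma_term s z a1 a2 D (Z.of_nat i - Z.of_nat N) n))). reflexivity.
Qed.

Lemma Im_partial s z a1 a2 D N :
  Im (sigma_partial s z a1 a2 D N) = S2 N (fun m n => Im (sigma_term s z a1 a2 D m n)).
Proof.
  unfold sigma_partial, S2. rewrite Im_sum_n.
  rewrite <- (sum_n_zs (fun m => zs N (fun n => Im (sigma_term s z a1 a2 D m n)))).
  apply sum_n_ext. intros i. rewrite Im_sum_n.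
  rewrite <- (sum_n_zs (fun n => Im (sigma_term s z a1 a2 D (Z.of_nat i - Z.of_nat N) n))). reflexivity.
Qed.

Lemma S2_reflect N F : S2 N F = S2 N (fun m n => F (- m)%Z (- n)%Z).
Proof.
  unfold S2. rewrite zs_reflect. apply zs_ext. intros k _. rewrite zs_reflect. reflexivity.
Qed.

Lemma sigma_term_neg s z a1 a2 D m n :
  sigma_term s z a1 a2 D (- m) (- n) = sigma_term s z a1 a2 (- D) m n.
Proof.
  unfold sigma_term, lat_pt. replace (a1 + D * - m)%Z with (a1 + - D * m)%Z by ring.
  replace (a2 + D * - n)%Z with (a2 + - D * n)%Z by ring. reflexivity.
Qed.

Lemma zs_const N c : zs N (fun _ => c) = (2 * INR N + 1) * c.
Proof. induction N; cbn [zs]. simpl. ring. rewrite IHN, S_INR. ring. Qed.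

Lemma S2_ext N F G : (forall m n, F m n = G m n) -> S2 N F = S2 N G.
Proof. intros H. unfold S2. apply zs_ext. intros. apply zs_ext. intros. apply H. Qed.

Lemma S2_plus N F G : S2 N (fun m n => F m n + G m n) = S2 N F + S2 N G.
Proof. unfold S2. rewrite <- zs_plus. apply zs_ext. intros. apply zs_plus. Qed.

Lemma S2_scal N a F : S2 N (fun m n => a * F m n) = a * S2 N F.
Proof. unfold S2. rewrite <- zs_scal. apply zs_ext. intros. apply zs_scal. Qed.

Lemma S2_minus N F G : S2 N (fun m n => F m n - G m n) = S2 N F - S2 N G.
Proof. unfold S2. rewrite <- zs_minus. apply zs_ext. intros. apply zs_minus. Qed.

Lemma S2_le N F G : (forall m n, F m n <= G m n) -> S2 N F <= S2 N G.
Proof. intros H. unfold S2. apply zs_le. intros. apply zs_le. intros. apply H. Qed.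

Lemma S2_abs N F : Rabs (S2 N F) <= S2 N (fun m n => Rabs (F m n)).
Proof. unfold S2. eapply Rle_trans. apply zs_abs. apply zs_le. intros. apply zs_abs. Qed.

Lemma Rpow_m2 u : 0 < u -> Rpower u (-2) = / (u * u).
Proof. intros H. replace (-2) with (- INR 2) by (simpl; ring). rewrite Rpower_Ropp, Rpower_pow by auto. simpl. f_equal. ring. Qed.

Definition W2 (c : Z) := if Z.eq_dec c 0 then 0 else / (IZR c * IZR c).

Lemma W2_split c : W2 c = wpos (/2) c + wpos (/2) (- c).
Proof.
  unfold W2, wpos. replace (-1 - 2 * / 2) with (-2) by field.
  destruct (Z.eq_dec c 0) as [->|H].
  - simpl. destruct (Z_lt_dec 0 0); [lia|]. ring.
  - destruct (Z_lt_dec 0 c); destruct (Z_lt_dec 0 (- c)); try lia.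
    + rewrite Rpow_m2. ring. apply IZR_lt; auto.
    + rewrite Rpow_m2. rewrite opp_IZR. field. apply not_0_IZR; auto. rewrite opp_IZR.
      assert (IZR c < 0) by (apply IZR_lt; lia). lra.
Qed.

Lemma W2_sum a1 D N : (1 <= D)%Z -> zs N (fun m => W2 (a1 + D * m)) <= 4.
Proof.
  intros HD. assert (HDr : 1 <= IZR D) by (apply IZR_le; lia).
  rewrite (zs_ext N _ (fun m => wpos (/2) (a1 + D * m) + wpos (/2) (- a1 + D * (- m)))).
  2:{ intros k _. rewrite W2_split. f_equal. f_equal. ring. }
  rewrite zs_plus.
  rewrite (zs_reflect N (fun m => wpos (/2) (- a1 + D * (- m)))).
  rewrite (zs_ext N (fun k => wpos (/ 2) (- a1 + D * - - k)) (fun k => wpos (/2) (- a1 + D * k))).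
  2:{ intros. rewrite Z.opp_involutive. reflexivity. }
  pose proof (wpos_sum (/2) a1 D N ltac:(lra) HD).
  pose proof (wpos_sum (/2) (- a1) D N ltac:(lra) HD).
  assert (/ (2 * IZR D) <= / 2). { apply Rinv_le_contravar; lra. }
  lra.
Qed.

Lemma tt_row x a1 a2 D m n : tt x a1 a2 D m n = (x * IZR (a1 + D * m) + IZR a2) + IZR D * IZR n.
Proof. unfold tt. rewrite (plus_IZR a2), mult_IZR. ring. Qed.

Lemma absc_ge1 c : (c <> 0)%Z -> 1 <= Rabs (IZR c).
Proof.
  intros H. rewrite <- abs_IZR. apply IZR_le. lia.
Qed.

Lemma YY_ge y a1 D m : 0 < y -> (a1 + D * m)%Z <> 0%Z -> y <= Rabs (YY y a1 D m).
Proof.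
  intros Hy H. unfold YY. rewrite Rabs_mult, (Rabs_right y) by lra.
  pose proof (absc_ge1 _ H). nra.
Qed.

Definition Fb x y a1 a2 D m n := if Z.eq_dec (a1 + D * m) 0 then 0 else
  KA y (IZR D) / (Rabs (YY y a1 D m) * rho (tt x a1 a2 D m n) (YY y a1 D m)).

Lemma FA1_dom s x y a1 a2 D m n : 0 <= s <= 1 -> 0 < y -> (1 <= D)%Z ->
  Rabs (FA1 s x y a1 a2 D m n) <= Fb x y a1 a2 D m n.
Proof.
  intros Hs Hy HD. unfold FA1, Fb. destruct (Z.eq_dec (a1 + D * m) 0).
  - rewrite Rabs_R0. lra.
  - apply A1_bound; auto. apply YY_ge; auto. apply IZR_lt; lia.
Qed.

Lemma FA2_dom s x y a1 a2 D m n : 0 <= s <= 1 -> 0 < y -> (1 <= D)%Z ->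
  Rabs (FA2 s x y a1 a2 D m n) <= Fb x y a1 a2 D m n.
Proof.
  intros Hs Hy HD. unfold FA2, Fb. destruct (Z.eq_dec (a1 + D * m) 0).
  - rewrite Rabs_R0. lra.
  - apply A2_bound; auto. apply YY_ge; auto. apply IZR_lt; lia.
Qed.

Lemma KA_pos y d : 0 < y -> 0 < d -> 0 < KA y d.
Proof.
  intros Hy Hd. unfold KA. assert (0 < / (y * y)) by (apply Rinv_0_lt_compat; nra).
  apply Rdiv_lt_0_compat; [|nra]. repeat apply Rmult_lt_0_compat; nra.
Qed.

Lemma row_rho x a1 a2 D m N Y : Y <> 0 -> (1 <= D)%Z ->
  zs N (fun n => / rho (tt x a1 a2 D m n) Y) <= PI / (IZR D * Rabs Y) + 2 / (Y * Y).
Proof.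
  intros HY HD. assert (Hb : 0 < Rabs Y) by (apply Rabs_pos_lt; auto).
  rewrite (zs_ext N _ (fun n => / (Rabs Y * Rabs Y + ((x * IZR (a1 + D * m) + IZR a2) + IZR D * IZR n) * ((x * IZR (a1 + D * m) + IZR a2) + IZR D * IZR n)))).
  2:{ intros k _. rewrite tt_row, abs_sq. unfold rho. f_equal. ring. }
  rewrite <- (abs_sq Y). apply row_upper; auto. apply IZR_lt; lia.
Qed.

Definition Bb y d := 4 * KA y d * (PI / d + 2 / y) / (y * y).

Lemma Fb_sum x y a1 a2 D N : 0 < y -> (1 <= D)%Z -> S2 N (Fb x y a1 a2 D) <= Bb y (IZR D).
Proof.
  intros Hy HD. assert (HDr : 1 <= IZR D) by (apply IZR_le; lia).
  assert (HK := KA_pos y (IZR D) Hy ltac:(lra)).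
  unfold S2. set (K := KA y (IZR D) * (PI / IZR D + 2 / y) / (y * y)).
  apply (Rle_trans _ (zs N (fun m => K * W2 (a1 + D * m)))).
  - apply zs_le. intros m _. unfold Fb, W2. destruct (Z.eq_dec (a1 + D * m) 0) as [H|H].
    + rewrite zs_zero. lra.
    + assert (HY := YY_nz y a1 D m Hy H). assert (HyY := YY_ge y a1 D m Hy H).
      set (Y := YY y a1 D m) in *.
      assert (Hb : 0 < Rabs Y) by lra.
      rewrite (zs_ext N _ (fun n => KA y (IZR D) / Rabs Y * / rho (tt x a1 a2 D m n) Y)).
      2:{ intros. field. split. apply Rgt_not_eq, rho_pos; auto. lra. }
      rewrite zs_scal.
      eapply Rle_trans. apply Rmult_le_compat_l. apply Rlt_le, Rdiv_lt_0_compat; auto.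
      apply row_rho; auto.
      assert (EY : Y * Y = (y * y) * (IZR (a1 + D * m) * IZR (a1 + D * m))) by (unfold Y, YY; ring).
      assert (Hc : 1 <= Rabs (IZR (a1 + D * m))) by (apply absc_ge1; auto).
      assert (Hcc : 1 <= IZR (a1 + D * m) * IZR (a1 + D * m)) by (rewrite <- abs_sq; nra).
      unfold K. 
      replace (KA y (IZR D) / Rabs Y * (PI / (IZR D * Rabs Y) + 2 / (Y * Y)))
        with (KA y (IZR D) * (PI / IZR D + 2 / Rabs Y) / (Y * Y)).
      2:{ rewrite <- (abs_sq Y). field. lra. }
      rewrite EY. unfold Rdiv.
      replace (KA y (IZR D) * (PI * / IZR D + 2 * / y) * / (y * y) * / (IZR (a1 + D * m) * IZR (a1 + D * m)))
        with (KA y (IZR D) * (PI * / IZR D + 2 * / y) * / (y * y * (IZR (a1 + D * m) * IZR (a1 + D * m)))).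
      2:{ field. split; nra. }
      apply Rmult_le_compat_r. apply Rlt_le, Rinv_0_lt_compat. nra.
      apply Rmult_le_compat_l. lra. apply Rplus_le_compat_l. apply Rmult_le_compat_l. lra.
      apply Rinv_le_contravar; lra.
  - rewrite zs_scal. unfold Bb.
    assert (0 <= K). { unfold K. apply Rmult_le_pos. apply Rmult_le_pos. lra.
       assert (0 < PI) by apply PI_RGT_0. assert (0 < / IZR D) by (apply Rinv_0_lt_compat; lra).
       assert (0 < / y) by (apply Rinv_0_lt_compat; lra). unfold Rdiv; nra. left; apply Rinv_0_lt_compat; nra. }
    replace (4 * KA y (IZR D) * (PI / IZR D + 2 / y) / (y * y)) with (K * 4) by (unfold K; field; lra).
    apply Rmult_le_compat_l; auto. apply W2_sum; auto.
Qed.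

Lemma Pw_half t Y : Y <> 0 -> Rabs t <= Pw t Y (/ 2) /\ Rabs Y <= Pw t Y (/ 2).
Proof.
  intros HY. unfold Pw. rewrite Rpower_sqrt by (apply rho_pos; auto).
  split; rewrite <- sqrt_Rsqr_abs; apply sqrt_le_1_alt; unfold Rsqr, rho;
  pose proof (Rle_0_sqr t); pose proof (Rle_0_sqr Y); unfold Rsqr in *; lra.
Qed.

Lemma G1_abs s Y t : Y <> 0 -> Rabs (G1 s Y t) <= Pw t Y (- / 2 - s).
Proof.
  intros HY. unfold G1. replace (- / 2 - s) with (/ 2 + (-1 - s)) by field. rewrite Pw_plus.
  rewrite Rabs_mult, Rabs_Ropp. rewrite (Rabs_right (Pw t Y (-1 - s))) by (apply Rle_ge, Rlt_le, Pw_pos).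
  apply Rmult_le_compat_r. apply Rlt_le, Pw_pos. apply Pw_half; auto.
Qed.

Lemma G2_abs s Y t : Y <> 0 -> Rabs (G2 s Y t) <= Pw t Y (- / 2 - s).
Proof.
  intros HY. unfold G2. replace (- / 2 - s) with (/ 2 + (-1 - s)) by field. rewrite Pw_plus.
  rewrite Rabs_mult. rewrite (Rabs_right (Pw t Y (-1 - s))) by (apply Rle_ge, Rlt_le, Pw_pos).
  apply Rmult_le_compat_r. apply Rlt_le, Pw_pos. apply Pw_half; auto.
Qed.

Lemma rho_lower x y c d : 0 < y -> y * y / (x * x + y * y) * (d * d) <= rho (x * c + d) (y * c).
Proof.
  intros Hy. unfold rho. assert (H : 0 < x * x + y * y) by (pose proof (Rle_0_sqr x); unfold Rsqr in H; nra).
  apply (Rmult_le_reg_l (x * x + y * y)); auto.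
  replace ((x * x + y * y) * (y * y / (x * x + y * y) * (d * d))) with (y * y * (d * d)) by (field; lra).
  pose proof (Rle_0_sqr (x * (x * c + d) + y * (y * c))). unfold Rsqr in H0. nra.
Qed.

Lemma Rpow_small s eps : 0 < s -> 0 < eps -> exists N0 : nat, forall N, (N0 <= N)%nat -> Rpower (INR N) (- s) < eps.
Proof.
  intros Hs He. destruct (INR_unbounded (Rpower eps (- / s))) as [N0 HN0].
  exists N0. intros N HN. assert (HP := Rpower_pos eps (- / s)).
  assert (HN' : INR N0 <= INR N) by (apply le_INR; auto).
  replace eps with (Rpower (Rpower eps (- / s)) (- s)).
  2:{ rewrite Rpower_mult. replace (- / s * - s) with 1 by (field; lra). apply Rpower_1; auto. }
  set (q := Rpower eps (- / s)) in *.
  rewrite (Rpower_Ropp q s), (Rpower_Ropp (INR N) s). apply Rinv_lt_contravar.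
  apply Rmult_lt_0_compat; apply Rpower_pos. apply Rlt_Rpower_l; lra.
Qed.

Definition FTg (Gf : R -> R -> R -> R) s x y a1 a2 D m n := if Z.eq_dec (a1 + D * m) 0 then 0 else
   (Gf s (YY y a1 D m) (tt x a1 a2 D m n + IZR D) - Gf s (YY y a1 D m) (tt x a1 a2 D m n)) / IZR D.

Lemma S2_FTg Gf s x y a1 a2 D N : (1 <= D)%Z ->
  S2 N (FTg Gf s x y a1 a2 D) = zs N (fun m => if Z.eq_dec (a1 + D * m) 0 then 0 else
    (Gf s (YY y a1 D m) (tt x a1 a2 D m (Z.of_nat N + 1)) - Gf s (YY y a1 D m) (tt x a1 a2 D m (- Z.of_nat N))) / IZR D).
Proof.
  intros HD. assert (HDr : 1 <= IZR D) by (apply IZR_le; lia).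
  unfold S2. apply zs_ext. intros m _. unfold FTg. destruct (Z.eq_dec (a1 + D * m) 0).
  - apply zs_zero.
  - rewrite (zs_ext N _ (fun n => / IZR D * (Gf s (YY y a1 D m) ((x * IZR (a1 + D * m) + IZR a2) + IZR D * IZR n + IZR D)
         - Gf s (YY y a1 D m) ((x * IZR (a1 + D * m) + IZR a2) + IZR D * IZR n)))).
    2:{ intros k _. rewrite tt_row. field. lra. }
    rewrite zs_scal. rewrite (tele_row _ _ N (Gf s (YY y a1 D m))).
    rewrite !tt_row. rewrite (plus_IZR (Z.of_nat N) 1). change (IZR 1) with 1.
    replace (x * IZR (a1 + D * m) + IZR a2 + IZR D * (IZR (Z.of_nat N) + 1)) with
      (x * IZR (a1 + D * m) + IZR a2 + IZR D * IZR (Z.of_nat N) + IZR D) by ring.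
    field. lra.
Qed.

Lemma FTg_lim Gf s x y a1 a2 D : 0 < s -> 0 < y -> (1 <= D)%Z ->
  (forall Y t, Y <> 0 -> Rabs (Gf s Y t) <= Pw t Y (- / 2 - s)) ->
  is_lim_seq (fun N => S2 N (FTg Gf s x y a1 a2 D)) 0.
Proof.
  intros Hs Hy HD HG. assert (HDr : 1 <= IZR D) by (apply IZR_le; lia).
  set (mu := y * y / (x * x + y * y)).
  assert (Hmu : 0 < mu). { unfold mu. pose proof (Rle_0_sqr x). unfold Rsqr in H. apply Rdiv_lt_0_compat; nra. }
  set (q := - / 2 - s).
  set (C := Rpower (mu / 4) q).
  assert (HC : 0 < C) by apply Rpower_pos.
  apply is_lim_seq_spec. intros eps.
  destruct (Rpow_small (2 * s) (eps * IZR D / (6 * C)) ltac:(lra)) as [N0 HN0].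
  { apply Rdiv_lt_0_compat. apply Rmult_lt_0_compat. apply cond_pos. lra. lra. }
  exists (N0 + 2 * Z.to_nat (Z.abs a2) + 1)%nat. intros N HN.
  assert (HNr : 1 <= INR N) by (apply (le_INR 1); lia).
  assert (Ha2 : 2 * Rabs (IZR a2) + 1 <= INR N).
  { rewrite <- abs_IZR. replace (IZR (Z.abs a2)) with (INR (Z.to_nat (Z.abs a2))).
    2:{ rewrite INR_IZR_INZ. f_equal. lia. }
    rewrite <- (Rmult_1_l (INR N)).
    assert (INR (2 * Z.to_nat (Z.abs a2) + 1) <= INR N) by (apply le_INR; lia).
    rewrite plus_INR, mult_INR in H. simpl in H. lra. }
  rewrite S2_FTg by auto. rewrite Rminus_0_r.
  set (bN := Rpower (mu * (INR N / 2 * (INR N / 2))) q).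
  assert (Hb : forall m n, (n = Z.of_nat N + 1 \/ n = - Z.of_nat N)%Z -> (a1 + D * m)%Z <> 0%Z ->
     Rabs (Gf s (YY y a1 D m) (tt x a1 a2 D m n)) <= bN).
  { intros m n Hn Hc. eapply Rle_trans. apply HG. apply YY_nz; auto.
    unfold Pw, bN. apply Rpow_anti. 2:{ unfold q. lra. }
    split. apply Rmult_lt_0_compat; auto. nra.
    unfold tt, YY. eapply Rle_trans. 2: apply rho_lower; auto. fold mu.
    apply Rmult_le_compat_l. lra.
    assert (He : INR N / 2 <= Rabs (IZR (a2 + D * n))).
    { rewrite plus_IZR, mult_IZR. destruct Hn as [-> | ->].
      - rewrite plus_IZR, <- INR_IZR_INZ. simpl.
        assert (IZR D * (INR N + 1) >= INR N + 1) by nra.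
        pose proof (Rabs_triang_inv (IZR D * (INR N + 1)) (- IZR a2)). rewrite Rabs_Ropp in H0.
        replace (IZR D * (INR N + 1) - - IZR a2) with (IZR a2 + IZR D * (INR N + 1)) in H0 by ring.
        rewrite (Rabs_right (IZR D * (INR N + 1))) in H0 by lra. lra.
      - rewrite opp_IZR, <- INR_IZR_INZ.
        assert (IZR D * INR N >= INR N) by nra.
        pose proof (Rabs_triang_inv (IZR D * INR N) (IZR a2)).
        replace (IZR a2 + IZR D * - INR N) with (- (IZR D * INR N - IZR a2)) by ring. rewrite Rabs_Ropp.
        rewrite (Rabs_right (IZR D * INR N)) in H0 by lra. lra. }
    rewrite <- (abs_sq (IZR (a2 + D * n))). assert (0 <= INR N / 2) by lra. apply Rmult_le_compat; lra. }
  assert (HbN : bN = C * (Rpower (INR N) (- (2 * s)) / INR N)).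
  { unfold bN, C. replace (mu * (INR N / 2 * (INR N / 2))) with (mu / 4 * (INR N * INR N)) by field.
    rewrite <- Rpower_mult_distr by (try apply Rmult_lt_0_compat; lra).
    f_equal. replace (INR N * INR N) with (Rpower (INR N) 2).
    2:{ replace 2 with (INR 2) by (simpl; ring). rewrite Rpower_pow by lra. simpl. ring. }
    rewrite Rpower_mult. unfold q. replace (2 * (- / 2 - s)) with (-1 + - (2 * s)) by field.
    rewrite Rpower_plus. replace (-1) with (- (1)) by ring. rewrite (Rpower_Ropp (INR N) 1), Rpower_1 by lra. field. lra. }
  eapply Rle_lt_trans. apply zs_abs.
  apply (Rle_lt_trans _ (zs N (fun _ => 2 * bN / IZR D))).
  - apply zs_le. intros m _. destruct (Z.eq_dec (a1 + D * m) 0) as [H|H].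
    + rewrite Rabs_R0. apply Rlt_le, Rdiv_lt_0_compat. unfold bN. pose proof (Rpower_pos (mu * (INR N / 2 * (INR N / 2))) q). lra. lra.
    + unfold Rdiv. rewrite Rabs_mult. rewrite (Rabs_right (/ IZR D)) by (apply Rle_ge, Rlt_le, Rinv_0_lt_compat; lra).
      apply Rmult_le_compat_r. apply Rlt_le, Rinv_0_lt_compat; lra.
      eapply Rle_trans. apply Rabs_triang. rewrite Rabs_Ropp.
      pose proof (Hb m _ (or_introl eq_refl) H). pose proof (Hb m _ (or_intror eq_refl) H). lra.
  - rewrite zs_const. rewrite HbN.
    assert (HR := HN0 N ltac:(lia)).
    assert (HRp := Rpower_pos (INR N) (- (2 * s))).
    apply (Rle_lt_trans _ (6 * C * Rpower (INR N) (- (2 * s)) / IZR D)).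
    + apply (Rmult_le_reg_r (INR N * IZR D)). nra.
      replace ((2 * INR N + 1) * (2 * (C * (Rpower (INR N) (- (2 * s)) / INR N)) / IZR D) * (INR N * IZR D))
        with ((2 * INR N + 1) * (2 * C * Rpower (INR N) (- (2 * s)))) by (field; lra).
      replace (6 * C * Rpower (INR N) (- (2 * s)) / IZR D * (INR N * IZR D)) with (3 * INR N * (2 * C * Rpower (INR N) (- (2 * s)))) by (field; lra).
      apply Rmult_le_compat_r. nra. lra.
    + apply (Rmult_lt_reg_r (IZR D / (6 * C))). apply Rdiv_lt_0_compat; lra.
      replace (6 * C * Rpower (INR N) (- (2 * s)) / IZR D * (IZR D / (6 * C))) with (Rpower (INR N) (- (2 * s))) by (field; lra).
      replace (eps * (IZR D / (6 * C))) with (eps * IZR D / (6 * C)) by (field; lra). exact HR.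
Qed.

Global Instance at_right_filter (x : R) : Filter (at_right x) :=
  @filter_filter _ _ (at_right_proper_filter x).

Lemma lim_const {T} (F : (T -> Prop) -> Prop) {FF : Filter F} (c : R) :
  filterlim (fun _ => c) F (locally c).
Proof. apply filterlim_const. Qed.

Lemma lim_id0 : filterlim (fun s : R => s) (at_right 0) (locally 0).
Proof. intros P HP. unfold filtermap. unfold at_right, within. destruct HP as [e He]. exists e. intros u Hu _. apply He. exact Hu. Qed.

Lemma lim_Rpow (b a0 a1 : R) : filterlim (fun s => Rpower b (a0 + a1 * s)) (at_right 0) (locally (Rpower b a0)).
Proof.
  assert (H0 : ex_derive (fun s => Rpower b (a0 + a1 * s)) 0).
  { unfold Rpower. auto_derive. auto. }
  assert (H := ex_derive_continuous (K := R_AbsRing) (V := R_NormedModule) _ _ H0).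
  intros P HP. specialize (H P). simpl in H. replace (a0 + a1 * 0) with a0 in H by ring. specialize (H HP).
  unfold filtermap in *. destruct H as [e He]. exists e. intros u Hu _. apply He. exact Hu.
Qed.

Lemma lim_minus {T} (F : (T -> Prop) -> Prop) {FF : Filter F} (f g : T -> R) a b :
  filterlim f F (locally a) -> filterlim g F (locally b) ->
  filterlim (fun s => f s - g s) F (locally (a - b)).
Proof.
  intros Hf Hg. apply (lim_plus F f (fun s => - g s) a (- b)); auto.
  apply (filterlim_comp _ _ _ g Ropp F (locally b) (locally (- b))); auto.
  apply (filterlim_opp b).
Qed.

Lemma lim_opp {T} (F : (T -> Prop) -> Prop) {FF : Filter F} (f : T -> R) a :
  filterlim f F (locally a) -> filterlim (fun s => - f s) F (locally (- a)).
Proof.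
  intros Hf. replace (- a) with (-1 * a) by ring.
  eapply filterlim_ext. 2: apply (lim_mult F (fun _ => -1) f (-1) a); auto. intros; simpl; ring.
  apply lim_const. exact FF.
Qed.

Lemma lim_ext {T} (F : (T -> Prop) -> Prop) {FF : Filter F} (f g : T -> R) a :
  F (fun s => f s = g s) -> filterlim f F (locally a) -> filterlim g F (locally a).
Proof.
  intros He Hf. eapply filterlim_ext_loc; eauto.
Qed.

Definition RF := at_right 0.
Lemma rp (f g : R -> R) a b : filterlim f RF (locally a) -> filterlim g RF (locally b) ->
  filterlim (fun s => f s + g s) RF (locally (a + b)).
Proof. apply lim_plus. apply at_right_filter. Qed.
Lemma rm (f g : R -> R) a b : filterlim f RF (locally a) -> filterlim g RF (locally b) ->
  filterlim (fun s => f s * g s) RF (locally (a * b)).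
Proof. apply lim_mult. apply at_right_filter. Qed.
Lemma rmi (f g : R -> R) a b : filterlim f RF (locally a) -> filterlim g RF (locally b) ->
  filterlim (fun s => f s - g s) RF (locally (a - b)).
Proof. apply lim_minus. apply at_right_filter. Qed.
Lemma ro (f : R -> R) a : filterlim f RF (locally a) -> filterlim (fun s => - f s) RF (locally (- a)).
Proof. apply lim_opp. apply at_right_filter. Qed.
Lemma rc (c : R) : filterlim (fun _ : R => c) RF (locally c).
Proof. apply lim_const. apply at_right_filter. Qed.
Lemma rid : filterlim (fun s : R => s) RF (locally 0).
Proof. apply lim_id0. Qed.

Lemma lim_Pw t Y a0 a1 : filterlim (fun s => Pw t Y (a0 + a1 * s)) (at_right 0) (locally (Pw t Y a0)).
Proof. unfold Pw. apply lim_Rpow. Qed.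

Lemma lim_Pw' t Y a0 : filterlim (fun s => Pw t Y (a0 - s)) (at_right 0) (locally (Pw t Y (a0 - 0))).
Proof.
  replace (a0 - 0) with a0 by ring.
  eapply filterlim_ext. 2: apply (lim_Pw t Y a0 (-1)). intros s. simpl. f_equal. ring.
Qed.

Lemma lim_g1 Y t : filterlim (fun s => g1 s Y t) RF (locally (g1 0 Y t)).
Proof.
  unfold g1. apply rp.
  - apply ro. apply lim_Pw'.
  - apply rm. apply rm. apply rm. apply rc. apply rp. apply rc. apply rid.
    apply rc. apply lim_Pw'.
Qed.

Lemma lim_G1 Y t : filterlim (fun s => G1 s Y t) RF (locally (G1 0 Y t)).
Proof. unfold G1. apply rm. apply rc. apply lim_Pw'. Qed.

Lemma lim_g2 Y t : filterlim (fun s => g2 s Y t) RF (locally (g2 0 Y t)).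
Proof.
  unfold g2. apply rm. apply rm. apply rm. apply rm. apply rc.
  apply rp. apply rc. apply rid. apply rc. apply rc. apply lim_Pw'.
Qed.

Lemma lim_G2 Y t : filterlim (fun s => G2 s Y t) RF (locally (G2 0 Y t)).
Proof. unfold G2. apply rm. apply rc. apply lim_Pw'. Qed.

Lemma lim_FA1 x y a1 a2 D m n : filterlim (fun s => FA1 s x y a1 a2 D m n) RF (locally (FA1 0 x y a1 a2 D m n)).
Proof.
  unfold FA1. destruct (Z.eq_dec (a1 + D * m) 0). apply rc.
  unfold A1. apply rmi. apply lim_g1. apply rm. apply rmi; apply lim_G1. apply rc.
Qed.

Lemma lim_FA2 x y a1 a2 D m n : filterlim (fun s => FA2 s x y a1 a2 D m n) RF (locally (FA2 0 x y a1 a2 D m n)).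
Proof.
  unfold FA2. destruct (Z.eq_dec (a1 + D * m) 0). apply rc.
  unfold A2. apply rmi. apply lim_g2. apply rm. apply rmi; apply lim_G2. apply rc.
Qed.
Lemma right_small (P : R -> Prop) (e : R) : 0 < e -> (forall s, 0 < s < e -> P s) -> at_right 0 P.
Proof.
  intros He H. exists (mkposreal e He). intros u Hu Hpos. apply H. split; auto.
  apply ball_R in Hu. assert (Hu' : Rabs (u - 0) < e) by exact Hu. rewrite Rminus_0_r, Rabs_right in Hu'; lra.
Qed.

Lemma FA1_conv x y a1 a2 D : 0 < y -> (1 <= D)%Z ->
  filterlim (fun s => LimR (fun N => S2 N (FA1 s x y a1 a2 D))) (at_right 0)
    (locally (LimR (fun N => S2 N (FA1 0 x y a1 a2 D)))).
Proof.
  intros Hy HD.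
  apply (S2_dct (at_right 0) (fun s => FA1 s x y a1 a2 D) (FA1 0 x y a1 a2 D) (Fb x y a1 a2 D) (Bb y (IZR D))).
  - apply (right_small _ 1). lra. intros s Hs m n. apply FA1_dom; auto. lra.
  - intros m n. apply FA1_dom; auto. lra.
  - intros N. apply Fb_sum; auto.
  - intros m n. apply lim_FA1.
Qed.

Lemma FA2_conv x y a1 a2 D : 0 < y -> (1 <= D)%Z ->
  filterlim (fun s => LimR (fun N => S2 N (FA2 s x y a1 a2 D))) (at_right 0)
    (locally (LimR (fun N => S2 N (FA2 0 x y a1 a2 D)))).
Proof.
  intros Hy HD.
  apply (S2_dct (at_right 0) (fun s => FA2 s x y a1 a2 D) (FA2 0 x y a1 a2 D) (Fb x y a1 a2 D) (Bb y (IZR D))).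
  - apply (right_small _ 1). lra. intros s Hs m n. apply FA2_dom; auto. lra.
  - intros m n. apply FA2_dom; auto. lra.
  - intros N. apply Fb_sum; auto.
  - intros m n. apply lim_FA2.
Qed.

Lemma Rpow_sq u q : 0 < u -> Rpower (u * u) q = Rpower u (2 * q).
Proof.
  intros H. replace (u * u) with (Rpower u 2).
  - rewrite Rpower_mult. try reflexivity.
  - replace 2 with (INR 2) by (simpl; ring). rewrite Rpower_pow by auto. simpl. ring.
Qed.

Lemma Rpow_le1 u q : 1 <= u -> q <= 0 -> Rpower u q <= 1.
Proof.
  intros Hu Hq. assert (Rpower u q <= Rpower u 0) by (apply Rle_Rpower; lra).
  rewrite Rpower_O in H by lra. exact H.
Qed.

Lemma Rpow_m1 u : 0 < u -> Rpower u (-1) = / u.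
Proof. intros H. replace (-1) with (- (1)) by ring. rewrite Rpower_Ropp, Rpower_1; auto. Qed.

Lemma wsplit s c : (c <> 0)%Z -> Rpower (Rabs (IZR c)) (-1 - 2 * s) = wpos s c + wpos s (- c).
Proof.
  intros H. unfold wpos. destruct (Z_lt_dec 0 c); destruct (Z_lt_dec 0 (- c)); try lia.
  - rewrite Rabs_right. ring. apply Rle_ge. apply IZR_le; lia.
  - rewrite Rabs_left. rewrite opp_IZR. ring. apply IZR_lt; lia.
Qed.

Lemma FX_nonneg s x y a1 a2 D m n : 0 <= FX s x y a1 a2 D m n.
Proof. unfold FX. destruct (Z.eq_dec (a1 + D * m) 0). lra. apply Rlt_le, Pw_pos. Qed.

Lemma FX_row_up s x y a1 a2 D m N : 0 < s -> 0 < y -> (1 <= D)%Z ->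
  zs N (fun n => FX s x y a1 a2 D m n) <=
  PI / IZR D * Rpower y (-1 - 2 * s) * (wpos s (a1 + D * m) + wpos s (- (a1 + D * m)))
  + 2 * Rpower y (- 2 * s) / (y * y) * W2 (a1 + D * m).
Proof.
  intros Hs Hy HD. assert (HDr : 1 <= IZR D) by (apply IZR_le; lia).
  unfold FX, W2. destruct (Z.eq_dec (a1 + D * m) 0) as [H|H].
  - rewrite zs_zero. unfold wpos. rewrite H. simpl. destruct (Z_lt_dec 0 0); try lia. lra.
  - rewrite <- wsplit by auto.
    assert (HY := YY_nz y a1 D m Hy H). set (Y := YY y a1 D m) in *.
    set (c := IZR (a1 + D * m)) in *.
    assert (Hc : 1 <= Rabs c) by (apply absc_ge1; auto).
    assert (HaY : 0 < Rabs Y) by (apply Rabs_pos_lt; auto).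
    assert (EY : Rabs Y = y * Rabs c) by (unfold Y, YY, c; rewrite Rabs_mult, (Rabs_right y); lra).
    apply (Rle_trans _ (zs N (fun n => Rpower (Y * Y) (- s) * / rho (tt x a1 a2 D m n) Y))).
    + apply zs_le. intros n _. rewrite (Pw_sh _ Y (- s) (-1 - s)) by (auto; ring).
      unfold Rdiv. apply Rmult_le_compat_r.
      apply Rlt_le, Rinv_0_lt_compat, rho_pos; auto.
      unfold Pw. apply Rpow_anti. split. apply Rsqr_pos_lt; auto. apply Y2_le. lra.
    + rewrite zs_scal. eapply Rle_trans. apply Rmult_le_compat_l. apply Rlt_le, Rpower_pos. apply row_rho; auto.
      rewrite <- (abs_sq Y). rewrite Rpow_sq by auto. rewrite EY.
      rewrite <- Rpower_mult_distr by lra.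
      assert (Hp1 : Rpower (Rabs c) (2 * - s) <= 1) by (apply Rpow_le1; lra).
      assert (Hp0 := Rpower_pos (Rabs c) (2 * - s)).
      assert (Hy1 := Rpower_pos y (2 * - s)).
      assert (E1 : Rpower y (-1 - 2 * s) = Rpower y (2 * - s) / y).
      { replace (-1 - 2 * s) with (-1 + 2 * - s) by ring. rewrite Rpower_plus, Rpow_m1 by lra. field. lra. }
      assert (E2 : Rpower (Rabs c) (-1 - 2 * s) = Rpower (Rabs c) (2 * - s) / Rabs c).
      { replace (-1 - 2 * s) with (-1 + 2 * - s) by ring. rewrite Rpower_plus, Rpow_m1 by lra. field. lra. }
      rewrite E1, E2. replace (Rpower y (- 2 * s)) with (Rpower y (2 * - s)) by (f_equal; ring).
      assert (0 < PI) by apply PI_RGT_0.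
      replace (Rpower y (2 * - s) * Rpower (Rabs c) (2 * - s) * (PI / (IZR D * (y * Rabs c)) + 2 / (y * Rabs c * (y * Rabs c))))
        with (PI / IZR D * (Rpower y (2 * - s) / y) * (Rpower (Rabs c) (2 * - s) / Rabs c) +
              2 * Rpower y (2 * - s) / (y * y) * (Rpower (Rabs c) (2 * - s) * / (c * c))).
      2:{ rewrite <- (abs_sq c). field. lra. }
      apply Rplus_le_compat_l. 
      replace (2 * Rpower y (2 * - s) / (y * y) * / (c * c)) with (2 * Rpower y (2 * - s) / (y * y) * (1 * / (c * c))) by ring.
      apply Rmult_le_compat_l. apply Rlt_le. apply Rdiv_lt_0_compat. lra. nra.
      apply Rmult_le_compat_r; auto. apply Rlt_le, Rinv_0_lt_compat. rewrite <- abs_sq. nra.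
Qed.

Definition Uc s y d := PI / d * Rpower y (-1 - 2 * s) * (/ d + 2 * s) + 8 * s * Rpower y (- 2 * s) / (y * y).

Lemma FX_S2_up s x y a1 a2 D N : 0 < s -> 0 < y -> (1 <= D)%Z ->
  s * S2 N (FX s x y a1 a2 D) <= Uc s y (IZR D).
Proof.
  intros Hs Hy HD. assert (HDr : 1 <= IZR D) by (apply IZR_le; lia).
  unfold S2. eapply Rle_trans. apply Rmult_le_compat_l. lra. apply zs_le. intros m _. apply FX_row_up; auto.
  rewrite zs_plus, !zs_scal.
  rewrite (zs_ext N (fun m => wpos s (a1 + D * m) + wpos s (- (a1 + D * m))) (fun m => wpos s (a1 + D * m) + wpos s (- a1 + D * (- m)))).
  2:{ intros. f_equal. f_equal. ring. }
  rewrite zs_plus.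
  rewrite (zs_reflect N (fun m => wpos s (- a1 + D * (- m)))).
  rewrite (zs_ext N (fun k => wpos s (- a1 + D * - - k)) (fun k => wpos s (- a1 + D * k))).
  2:{ intros. rewrite Z.opp_involutive. reflexivity. }
  pose proof (wpos_sum s a1 D N Hs HD). pose proof (wpos_sum s (- a1) D N Hs HD).
  pose proof (W2_sum a1 D N HD).
  assert (0 <= zs N (fun m => W2 (a1 + D * m))). { apply zs_nonneg. intros. unfold W2. destruct (Z.eq_dec _ 0). lra.
     apply Rlt_le, Rinv_0_lt_compat. apply Rsqr_pos_lt. apply not_0_IZR; auto. }
  assert (Hp1 := Rpower_pos y (-1 - 2 * s)). assert (Hp2 := Rpower_pos y (- 2 * s)).
  assert (0 < PI) by apply PI_RGT_0.
  unfold Uc.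
  set (A := PI / IZR D * Rpower y (-1 - 2 * s)).
  assert (0 < A) by (unfold A; apply Rmult_lt_0_compat; [apply Rdiv_lt_0_compat|]; lra).
  set (B := 2 * Rpower y (- 2 * s) / (y * y)).
  assert (0 < B) by (unfold B; apply Rdiv_lt_0_compat; nra).
  set (S1 := zs N (fun m => wpos s (a1 + D * m))) in *.
  set (S2' := zs N (fun m => wpos s (- a1 + D * m))) in *.
  set (S3 := zs N (fun m => W2 (a1 + D * m))) in *.
  assert (s * (A * (S1 + S2')) <= A * (/ IZR D + 2 * s)).
  { replace (s * (A * (S1 + S2'))) with (A * (s * S1 + s * S2')) by ring. apply Rmult_le_compat_l. lra.
    replace (/ IZR D) with (/ (2 * IZR D) + / (2 * IZR D)) by (field; lra). lra. }
  assert (s * (B * S3) <= 8 * s * Rpower y (- 2 * s) / (y * y)).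
  { replace (8 * s * Rpower y (- 2 * s) / (y * y)) with (s * (B * 4)) by (unfold B; field; lra).
    apply Rmult_le_compat_l. lra. apply Rmult_le_compat_l. lra. lra. }
  replace (s * (A * (S1 + S2') + B * S3)) with (s * (A * (S1 + S2')) + s * (B * S3)) by ring.
  lra.
Qed.

Lemma FX_term_lo s Y t R : 0 < s -> Y <> 0 -> 1 <= R ->
  Rpower (Y * Y) (- s) * (Rpower (1 + R * R) (- s) * / rho t Y - Ttail (R * Rabs Y) t) <= Pw t Y (-1 - s).
Proof.
  intros Hs HY HR. assert (Hr := rho_pos t Y HY). assert (HY2 : 0 < Y * Y) by (apply Rsqr_pos_lt; auto).
  assert (HaY : 0 < Rabs Y) by (apply Rabs_pos_lt; auto).
  assert (HRr : Rpower (1 + R * R) (- s) <= 1) by (apply Rpow_le1; nra).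
  assert (HRp := Rpower_pos (1 + R * R) (- s)).
  assert (HYp := Rpower_pos (Y * Y) (- s)).
  rewrite (Pw_sh t Y (- s) (-1 - s)) by (auto; ring).
  unfold Ttail. destruct (Rlt_dec (R * Rabs Y) (Rabs t)) as [Ht|Ht].
  - assert (Hab : 0 < Rabs t) by nra.
    assert (/ rho t Y <= / (t * t)). { apply Rinv_le_contravar. rewrite <- abs_sq. nra. apply t2_le. }
    assert (Rpower (1 + R * R) (- s) * / rho t Y - / (t * t) <= 0).
    { assert (Rpower (1 + R * R) (- s) * / rho t Y <= 1 * / rho t Y) by (apply Rmult_le_compat_r; [apply Rlt_le, Rinv_0_lt_compat|]; lra). lra. }
    assert (0 <= Pw t Y (- s) / rho t Y) by (apply Rlt_le, Rdiv_lt_0_compat; [apply Pw_pos | auto]).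
    assert (Rpower (Y * Y) (- s) * (Rpower (1 + R * R) (- s) * / rho t Y - / (t * t)) <= 0).
    { nra. }
    lra.
  - rewrite Rminus_0_r. unfold Rdiv. rewrite <- Rmult_assoc. apply Rmult_le_compat_r.
    apply Rlt_le, Rinv_0_lt_compat; auto.
    rewrite Rmult_comm. rewrite Rpower_mult_distr by nra. unfold Pw. apply Rpow_anti. split. nra.
    unfold rho. assert (t * t <= R * R * (Y * Y)).
    { rewrite <- (abs_sq t), <- (abs_sq Y). assert (0 <= Rabs t) by apply Rabs_pos. 
      replace (R * R * (Rabs Y * Rabs Y)) with ((R * Rabs Y) * (R * Rabs Y)) by ring. apply Rmult_le_compat; lra. }
    nra. lra.
Qed.

Definition Lam s R d := Rpower (1 + R * R) (- s) * PI / d - 4 / (d * R).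

Lemma FX_row_lo s x y a1 a2 D m N R c0 Kc : 0 < s -> 0 < y -> (1 <= D)%Z -> 1 <= R -> 1 <= c0 ->
  2 * IZR D <= R * y * c0 -> 0 < Kc ->
  Kc <= (x * IZR (a1 + D * m) + IZR a2) + IZR D * IZR (Z.of_nat N) ->
  (x * IZR (a1 + D * m) + IZR a2) + IZR D * IZR (- Z.of_nat N) <= - Kc ->
  Lam s R (IZR D) * Rpower y (-1 - 2 * s) * (wge s c0 (a1 + D * m) + wge s c0 (- (a1 + D * m)))
   - Rpower y (- 2 * s) * (2 / (IZR D * Kc) + 2 / (y * y) * W2 (a1 + D * m))
  <= zs N (fun n => FX s x y a1 a2 D m n).
Proof.
  intros Hs Hy HD HR Hc0 HRc HK HK1 HK2. assert (HDr : 1 <= IZR D) by (apply IZR_le; lia).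
  assert (Hz : 0 <= zs N (fun n => FX s x y a1 a2 D m n)) by (apply zs_nonneg; intros; apply FX_nonneg).
  assert (Hyp := Rpower_pos y (- 2 * s)).
  assert (Hneg : 0 <= Rpower y (- 2 * s) * (2 / (IZR D * Kc) + 2 / (y * y) * W2 (a1 + D * m))).
  { apply Rmult_le_pos. lra. apply Rplus_le_le_0_compat. apply Rlt_le, Rdiv_lt_0_compat; nra.
    apply Rmult_le_pos. apply Rlt_le, Rdiv_lt_0_compat; nra. unfold W2. destruct (Z.eq_dec _ 0). lra.
    apply Rlt_le, Rinv_0_lt_compat. apply Rsqr_pos_lt. apply not_0_IZR; auto. }
  set (c := (a1 + D * m)%Z) in *.
  destruct (Rle_dec c0 (Rabs (IZR c))) as [Hcc|Hcc].
  2:{ assert (E : wge s c0 c + wge s c0 (- c) = 0).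
      { unfold wge. rewrite opp_IZR. destruct (Rle_dec c0 (IZR c)); destruct (Rle_dec c0 (- IZR c)); try lra.
        - exfalso. apply Hcc. eapply Rle_trans. apply r. apply Rle_abs.
        - exfalso. apply Hcc. eapply Rle_trans. apply r. rewrite <- Rabs_Ropp. apply Rle_abs. }
      rewrite E. lra. }
  assert (Hc : c <> 0%Z). { intros Hc. rewrite Hc in Hcc. rewrite Rabs_R0 in Hcc. lra. }
  assert (Ew : wge s c0 c + wge s c0 (- c) = Rpower (Rabs (IZR c)) (-1 - 2 * s)).
  { unfold wge. rewrite opp_IZR. destruct (Rle_dec c0 (IZR c)); destruct (Rle_dec c0 (- IZR c)); try lra.
    - rewrite Rabs_right by lra. ring.
    - rewrite Rabs_left by lra. ring.
    - exfalso. unfold Rabs in Hcc. destruct (Rcase_abs (IZR c)); lra. }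
  rewrite Ew.
  assert (HY := YY_nz y a1 D m Hy Hc). set (Y := YY y a1 D m) in *.
  assert (Hca : 1 <= Rabs (IZR c)) by (apply absc_ge1; auto).
  assert (EY : Rabs Y = y * Rabs (IZR c)) by (unfold Y, YY; fold c; rewrite Rabs_mult, (Rabs_right y); lra).
  assert (HaY : 0 < Rabs Y) by (apply Rabs_pos_lt; auto).
  set (X := x * IZR c + IZR a2) in *.
  set (T := R * Rabs Y).
  assert (HT : 2 * IZR D <= T). { unfold T. rewrite EY. nra. }
  apply (Rle_trans _ (zs N (fun n => Rpower (Y * Y) (- s) * (Rpower (1 + R * R) (- s) * / rho (tt x a1 a2 D m n) Y - Ttail T (tt x a1 a2 D m n))))).
  2:{ apply zs_le. intros n _. unfold FX. fold c. destruct (Z.eq_dec c 0); try contradiction. apply FX_term_lo; auto. }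
  rewrite zs_scal, zs_minus, zs_scal.
  assert (Hrow : PI / (IZR D * Rabs Y) - 2 / (IZR D * Kc) - 2 / (Rabs Y * Rabs Y) <= zs N (fun n => / rho (tt x a1 a2 D m n) Y)).
  { rewrite (zs_ext N _ (fun n => / (Rabs Y * Rabs Y + (X + IZR D * IZR n) * (X + IZR D * IZR n)))).
    2:{ intros k _. rewrite tt_row. fold c X. rewrite abs_sq. unfold rho. f_equal. ring. }
    apply row_lower; auto. lra. }
  assert (Htail : zs N (fun n => Ttail T (tt x a1 a2 D m n)) <= 4 / (IZR D * T)).
  { rewrite (zs_ext N _ (fun n => Ttail T (X + IZR D * IZR n))).
    2:{ intros k _. rewrite tt_row. reflexivity. }
    eapply Rle_trans. apply row_tail; lra.
    apply (Rmult_le_reg_r (IZR D * (T - IZR D) * T)). apply Rmult_lt_0_compat; nra.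
    replace (2 / (IZR D * (T - IZR D)) * (IZR D * (T - IZR D) * T)) with (2 * T) by (field; lra).
    replace (4 / (IZR D * T) * (IZR D * (T - IZR D) * T)) with (4 * (T - IZR D)) by (field; lra). lra. }
  assert (HRr : Rpower (1 + R * R) (- s) <= 1) by (apply Rpow_le1; nra).
  assert (HRp := Rpower_pos (1 + R * R) (- s)).
  assert (EYY : Rpower (Y * Y) (- s) = Rpower y (- 2 * s) * Rpower (Rabs (IZR c)) (2 * - s)).
  { rewrite <- (abs_sq Y). rewrite Rpow_sq by auto. rewrite EY. rewrite <- Rpower_mult_distr by lra. f_equal. f_equal. ring. }
  assert (Hcp1 : Rpower (Rabs (IZR c)) (2 * - s) <= 1) by (apply Rpow_le1; lra).
  assert (Hcp0 := Rpower_pos (Rabs (IZR c)) (2 * - s)).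
  assert (E1 : Rpower y (-1 - 2 * s) = Rpower y (- 2 * s) / y).
  { replace (-1 - 2 * s) with (-1 + - 2 * s) by ring. rewrite Rpower_plus, Rpow_m1 by lra. field. lra. }
  assert (E2 : Rpower (Rabs (IZR c)) (-1 - 2 * s) = Rpower (Rabs (IZR c)) (2 * - s) / Rabs (IZR c)).
  { replace (-1 - 2 * s) with (-1 + 2 * - s) by ring. rewrite Rpower_plus, Rpow_m1 by lra. field. lra. }
  set (ry := Rpower y (- 2 * s)) in *. set (rc := Rpower (Rabs (IZR c)) (2 * - s)) in *.
  set (rR := Rpower (1 + R * R) (- s)) in *.
  set (S := zs N (fun n => / rho (tt x a1 a2 D m n) Y)) in *.
  set (Tl := zs N (fun n => Ttail T (tt x a1 a2 D m n))) in *.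
  rewrite EYY.
  assert (HS : rR * (PI / (IZR D * Rabs Y) - 2 / (IZR D * Kc) - 2 / (Rabs Y * Rabs Y)) - 4 / (IZR D * T) <= rR * S - Tl).
  { assert (rR * (PI / (IZR D * Rabs Y) - 2 / (IZR D * Kc) - 2 / (Rabs Y * Rabs Y)) <= rR * S) by (apply Rmult_le_compat_l; lra). lra. }
  eapply Rle_trans. 2:{ apply Rmult_le_compat_l. apply Rlt_le, Rmult_lt_0_compat; auto. exact HS. }
  unfold Lam, T. rewrite EY, E1, E2. unfold W2. destruct (Z.eq_dec c 0); try contradiction.
  assert (0 < PI) by apply PI_RGT_0.
  set (u := Rabs (IZR c)) in *.
  assert (Ecc : IZR c * IZR c = u * u) by (unfold u; rewrite abs_sq; auto).
  rewrite Ecc.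
  replace (ry * rc * (rR * (PI / (IZR D * (y * u)) - 2 / (IZR D * Kc) - 2 / (y * u * (y * u))) - 4 / (IZR D * (R * (y * u)))))
    with ((rR * PI / IZR D - 4 / (IZR D * R)) * (ry / y) * (rc / u) - ry * ((rc * rR) * (2 / (IZR D * Kc) + 2 / (y * y) * / (u * u))))
    by (field; repeat split; lra).
  apply Rplus_le_compat_l. apply Ropp_le_contravar. apply Rmult_le_compat_l. lra.
  rewrite <- (Rmult_1_l (2 / (IZR D * Kc) + 2 / (y * y) * / (u * u))) at 2.
  apply Rmult_le_compat_r. apply Rplus_le_le_0_compat. apply Rlt_le, Rdiv_lt_0_compat; nra.
  apply Rmult_le_pos. apply Rlt_le, Rdiv_lt_0_compat; nra. apply Rlt_le, Rinv_0_lt_compat; nra.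
  nra.
Qed.

Lemma Rpow_small_real s eps : 0 < s -> 0 < eps -> exists B, 0 < B /\ forall u, B <= u -> Rpower u (- s) < eps.
Proof.
  intros Hs He. exists (Rpower eps (- / s) + 1). split. pose proof (Rpower_pos eps (- / s)). lra.
  intros u Hu. assert (HP := Rpower_pos eps (- / s)).
  replace eps with (Rpower (Rpower eps (- / s)) (- s)).
  2:{ rewrite Rpower_mult. replace (- / s * - s) with 1 by (field; lra). apply Rpower_1; auto. }
  set (q := Rpower eps (- / s)) in *.
  rewrite (Rpower_Ropp q s), (Rpower_Ropp u s). apply Rinv_lt_contravar.
  apply Rmult_lt_0_compat; apply Rpower_pos. apply Rlt_Rpower_l; lra.
Qed.

Lemma lim_ge_eps (u : nat -> R) (l b : R) : is_lim_seq u l ->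
  (forall eta, 0 < eta -> exists N0, forall N, (N0 <= N)%nat -> b - eta <= u N) -> b <= l.
Proof.
  intros Hl H. apply Rnot_lt_le. intros Hlt.
  destruct (H ((b - l) / 2) ltac:(lra)) as [N0 HN0].
  apply is_lim_seq_spec in Hl. unfold is_lim_seq' in Hl. cbv iota beta in Hl. destruct (Hl (mkposreal ((b - l) / 2) ltac:(lra))) as [N1 HN1].
  specialize (HN0 (N0 + N1)%nat ltac:(lia)). specialize (HN1 (N0 + N1)%nat ltac:(lia)). simpl in HN1.
  apply Rabs_lt_between in HN1. lra.
Qed.

Lemma le_eps a b : (forall eta, 0 < eta -> b - eta <= a) -> b <= a.
Proof. intros H. apply Rnot_lt_le. intros Hlt. specialize (H ((b - a) / 2) ltac:(lra)). lra. Qed.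

Lemma IZR_m_bound (a1 D m : Z) M : (1 <= D)%Z -> (- Z.of_nat M <= m <= Z.of_nat M)%Z ->
  Rabs (IZR (a1 + D * m)) <= Rabs (IZR a1) + IZR D * INR M.
Proof.
  intros HD Hm. rewrite plus_IZR, mult_IZR. eapply Rle_trans. apply Rabs_triang.
  apply Rplus_le_compat_l. rewrite Rabs_mult. rewrite (Rabs_right (IZR D)) by (apply Rle_ge, IZR_le; lia).
  apply Rmult_le_compat_l. apply IZR_le; lia. rewrite INR_IZR_INZ. rewrite <- abs_IZR. apply IZR_le. lia.
Qed.

Lemma FX_lim_ex s x y a1 a2 D : 0 < s -> 0 < y -> (1 <= D)%Z ->
  is_lim_seq (fun N => S2 N (FX s x y a1 a2 D)) (LimR (fun N => S2 N (FX s x y a1 a2 D))).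
Proof.
  intros Hs Hy HD.
  destruct (S2_dom (FX s x y a1 a2 D) (FX s x y a1 a2 D) (Uc s y (IZR D) / s)) as [H1 _].
  - intros m n. rewrite Rabs_right. lra. apply Rle_ge, FX_nonneg.
  - intros N. apply (Rmult_le_reg_l s); auto. replace (s * (Uc s y (IZR D) / s)) with (Uc s y (IZR D)) by (field; lra).
    apply FX_S2_up; auto.
  - apply fin_lim; auto.
Qed.

Lemma FX_lim_lo s x y a1 a2 D R c0 : 0 < s -> 0 < y -> (1 <= D)%Z -> 1 <= R -> 1 <= c0 ->
  2 * IZR D <= R * y * c0 -> 0 <= Lam s R (IZR D) ->
  Lam s R (IZR D) * Rpower y (-1 - 2 * s) * Rpower (c0 + IZR D) (- 2 * s) / IZR D
    - 8 * s * Rpower y (- 2 * s) / (y * y)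
  <= s * LimR (fun N => S2 N (FX s x y a1 a2 D)).
Proof.
  intros Hs Hy HD HR Hc0 HRc HL. assert (HDr : 1 <= IZR D) by (apply IZR_le; lia).
  set (L := LimR (fun N => S2 N (FX s x y a1 a2 D))).
  assert (HlimL := FX_lim_ex s x y a1 a2 D Hs Hy HD). fold L in HlimL.
  set (Lm := Lam s R (IZR D)) in *.
  set (Ry1 := Rpower y (-1 - 2 * s)). set (Ry2 := Rpower y (- 2 * s)).
  assert (HRy1 : 0 < Ry1) by apply Rpower_pos. assert (HRy2 : 0 < Ry2) by apply Rpower_pos.
  set (SM := fun M : nat => zs M (fun m => wge s c0 (a1 + D * m) + wge s c0 (- (a1 + D * m)))).
  assert (Step1 : forall M, Lm * Ry1 * SM M - 8 * Ry2 / (y * y) <= L).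
  { intros M. apply (lim_ge_eps _ L _ HlimL). intros eta Heta.
    set (XM := Rabs x * (Rabs (IZR a1) + IZR D * INR M) + Rabs (IZR a2)).
    assert (HXM : 0 <= XM). { unfold XM. pose proof (Rabs_pos x). pose proof (Rabs_pos (IZR a1)). pose proof (Rabs_pos (IZR a2)).
      pose proof (pos_INR M). apply Rplus_le_le_0_compat; [|lra]. apply Rmult_le_pos; [lra|].
      apply Rplus_le_le_0_compat; [lra|]. apply Rmult_le_pos; lra. }
    set (Q := Ry2 * (2 * INR M + 1) * 2 / IZR D).
    assert (HQ : 0 <= Q). { unfold Q. pose proof (pos_INR M). apply Rmult_le_pos. nra. apply Rlt_le, Rinv_0_lt_compat; lra. }
    destruct (INR_unbounded ((XM + 1 + Q / eta) / IZR D + INR M)) as [N0 HN0].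
    exists N0. intros N HN.
    assert (HNr : INR N0 <= INR N) by (apply le_INR; auto).
    set (Kc := IZR D * INR N - XM).
    assert (HQe : 0 <= Q / eta) by (apply Rmult_le_pos; [auto | apply Rlt_le, Rinv_0_lt_compat; auto]).
    assert (HKc1 : XM + 1 + Q / eta <= IZR D * INR N).
    { assert ((XM + 1 + Q / eta) / IZR D <= INR N) by (pose proof (pos_INR M); lra).
      apply (Rmult_le_compat_l (IZR D)) in H; [|lra]. replace (IZR D * ((XM + 1 + Q / eta) / IZR D)) with (XM + 1 + Q / eta) in H by (field; lra). exact H. }
    assert (HKc : 1 <= Kc) by (unfold Kc; lra).
    assert (HMN : (M <= N)%nat). { apply INR_le. pose proof (pos_INR M). assert (0 <= (XM + 1 + Q / eta) / IZR D) by (apply Rmult_le_pos; [lra | apply Rlt_le, Rinv_0_lt_compat; lra]). lra. }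
    eapply Rle_trans. 2:{ unfold S2. apply (zs_mono M N); auto. intros m. apply zs_nonneg. intros; apply FX_nonneg. }
    eapply Rle_trans. 2:{ apply zs_le. intros m Hm. apply (FX_row_lo s x y a1 a2 D m N R c0 Kc); auto; try lra.
      - assert (Hb := IZR_m_bound a1 D m M HD Hm).
        assert (Rabs (x * IZR (a1 + D * m) + IZR a2) <= XM).
        { unfold XM. eapply Rle_trans. apply Rabs_triang. rewrite Rabs_mult. apply Rplus_le_compat_r.
          apply Rmult_le_compat_l. apply Rabs_pos. auto. }
        rewrite <- INR_IZR_INZ. unfold Kc. apply Rabs_le_between in H. lra.
      - assert (Hb := IZR_m_bound a1 D m M HD Hm).
        assert (Rabs (x * IZR (a1 + D * m) + IZR a2) <= XM).
        { unfold XM. eapply Rle_trans. apply Rabs_triang. rewrite Rabs_mult. apply Rplus_le_compat_r.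
          apply Rmult_le_compat_l. apply Rabs_pos. auto. }
        rewrite opp_IZR, <- INR_IZR_INZ. unfold Kc. apply Rabs_le_between in H. lra. }
    rewrite zs_minus, zs_scal. fold (SM M). rewrite zs_scal, zs_plus, zs_const, zs_scal.
    assert (HW := W2_sum a1 D M HD).
    assert (Hq : Ry2 * ((2 * INR M + 1) * (2 / (IZR D * Kc))) <= eta).
    { replace (Ry2 * ((2 * INR M + 1) * (2 / (IZR D * Kc)))) with (Q / Kc) by (unfold Q; field; lra).
      apply (Rmult_le_reg_r Kc). lra. replace (Q / Kc * Kc) with Q by (field; lra).
      assert (Q / eta <= Kc) by (unfold Kc; lra).
      apply (Rmult_le_compat_l eta) in H; [|lra]. replace (eta * (Q / eta)) with Q in H by (field; lra). lra. }
    assert (Ry2 * (2 / (y * y) * zs M (fun m => W2 (a1 + D * m))) <= 8 * Ry2 / (y * y)).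
    { replace (8 * Ry2 / (y * y)) with (Ry2 * (2 / (y * y) * 4)) by (field; lra).
      apply Rmult_le_compat_l. lra. apply Rmult_le_compat_l. apply Rlt_le, Rdiv_lt_0_compat; nra. auto. }
    replace (Lm * Ry1 * SM M) with (Lm * (Ry1 * SM M)) by ring.
    fold Lm Ry1 Ry2. lra. }
  apply le_eps. intros eta Heta.
  set (e1 := eta * IZR D / (Lm * Ry1 + 1)).
  assert (He1 : 0 < e1). { unfold e1. apply Rdiv_lt_0_compat. nra. nra. }
  destruct (Rpow_small_real (2 * s) e1 ltac:(lra) He1) as [B [HB HBu]].
  destruct (INR_unbounded (B + c0 + Rabs (IZR a1))) as [M HM].
  assert (HMp : 0 <= Rabs (IZR a1)) by apply Rabs_pos.
  assert (EM : IZR (Z.of_nat M) = INR M) by (rewrite INR_IZR_INZ; auto).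
  assert (Hsplit : SM M = zs M (fun m => wge s c0 (a1 + D * m)) + zs M (fun m => wge s c0 (- a1 + D * m))).
  { unfold SM. rewrite zs_plus. f_equal.
    rewrite (zs_reflect M (fun m => wge s c0 (- (a1 + D * m)))). apply zs_ext. intros. f_equal. ring. }
  assert (Hw1 := wge_sum s a1 D M c0 Hs HD Hc0).
  assert (Hw2 := wge_sum s (- a1) D M c0 Hs HD Hc0).
  rewrite !opp_IZR in Hw1, Hw2. rewrite !EM in Hw1, Hw2.
  rewrite (opp_IZR (Z.of_nat M)), EM in Hw2.
  replace (IZR D * - INR M) with (- (IZR D * INR M)) in Hw1 by ring.
  replace (IZR D * - INR M) with (- (IZR D * INR M)) in Hw2 by ring.
  assert (Ha1 := Rle_abs (IZR a1)). assert (Ha1' := Rle_abs (- IZR a1)). rewrite Rabs_Ropp in Ha1'.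
  assert (HDM : INR M <= IZR D * INR M) by (pose proof (pos_INR M); nra).
  assert (C1 : IZR a1 + - (IZR D * INR M) <= c0) by lra.
  assert (C2 : c0 <= IZR a1 + IZR D * INR M + IZR D) by lra.
  assert (C3 : - IZR a1 + - (IZR D * INR M) <= c0) by lra.
  assert (C4 : c0 <= - IZR a1 + IZR D * INR M + IZR D) by lra.
  specialize (Hw1 C1 C2). specialize (Hw2 C3 C4).
  assert (T1 : Rpower (IZR a1 + IZR D * INR M + IZR D) (- 2 * s) < e1).
  { replace (- 2 * s) with (- (2 * s)) by ring. apply HBu. lra. }
  assert (T2 : Rpower (- IZR a1 + IZR D * INR M + IZR D) (- 2 * s) < e1).
  { replace (- 2 * s) with (- (2 * s)) by ring. apply HBu. lra. }
  specialize (Step1 M). rewrite Hsplit in Step1.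
  set (Pc := Rpower (c0 + IZR D) (- 2 * s)) in *.
  set (S1 := zs M (fun m => wge s c0 (a1 + D * m))) in *.
  set (S2' := zs M (fun m => wge s c0 (- a1 + D * m))) in *.
  assert (Hs1 : s * (S1 + S2') >= (2 * Pc - 2 * e1) / (2 * IZR D)).
  { apply Rle_ge. replace (s * (S1 + S2')) with (s * S1 + s * S2') by ring.
    eapply Rle_trans. 2: apply Rplus_le_compat; [exact Hw1 | exact Hw2].
    replace ((2 * Pc - 2 * e1) / (2 * IZR D)) with ((Pc - e1) / (2 * IZR D) + (Pc - e1) / (2 * IZR D)) by (field; lra).
    apply Rplus_le_compat; unfold Rdiv; apply Rmult_le_compat_r; try (apply Rlt_le, Rinv_0_lt_compat; lra); lra. }
  assert (HsL : s * (Lm * Ry1 * (S1 + S2') - 8 * Ry2 / (y * y)) <= s * L) by (apply Rmult_le_compat_l; lra).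
  assert (Hmain : Lm * Ry1 * ((2 * Pc - 2 * e1) / (2 * IZR D)) <= Lm * Ry1 * (s * (S1 + S2'))).
  { apply Rmult_le_compat_l. nra. lra. }
  assert (Hlast : Lm * Ry1 * e1 / IZR D <= eta).
  { unfold e1. replace (Lm * Ry1 * (eta * IZR D / (Lm * Ry1 + 1)) / IZR D) with (eta * (Lm * Ry1 / (Lm * Ry1 + 1))) by (field; split; nra).
    rewrite <- (Rmult_1_r eta) at 2. apply Rmult_le_compat_l. lra.
    apply (Rmult_le_reg_r (Lm * Ry1 + 1)). nra. replace (Lm * Ry1 / (Lm * Ry1 + 1) * (Lm * Ry1 + 1)) with (Lm * Ry1) by (field; nra). lra. }
  replace (Lm * Ry1 * ((2 * Pc - 2 * e1) / (2 * IZR D))) with (Lm * Ry1 * Pc / IZR D - Lm * Ry1 * e1 / IZR D) in Hmain by (field; lra).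
  replace (s * (Lm * Ry1 * (S1 + S2') - 8 * Ry2 / (y * y))) with (Lm * Ry1 * (s * (S1 + S2')) - 8 * s * Ry2 / (y * y)) in HsL by (field; nra).
  lra.
Qed.

Lemma lim_Rp (b a0 a1 : R) (f : R -> R) : (forall s, f s = Rpower b (a0 + a1 * s)) ->
  filterlim f RF (locally (Rpower b a0)).
Proof. intros H. eapply filterlim_ext. 2: apply lim_Rpow. intros; simpl; rewrite H; auto. Qed.

Lemma lim_eq (f : R -> R) (a b : R) : a = b -> filterlim f RF (locally a) -> filterlim f RF (locally b).
Proof. intros ->; auto. Qed.

Lemma ev_lt (f : R -> R) (a c : R) : filterlim f RF (locally a) -> c < a -> RF (fun s => c < f s).
Proof.
  intros H Hc. rewrite lim_R_iff in H. 2: apply at_right_filter.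
  specialize (H (a - c) ltac:(lra)). eapply filter_imp; [|exact H].
  intros s Hs. apply Rabs_lt_between in Hs. lra.
Qed.

Lemma ev_gt (f : R -> R) (a c : R) : filterlim f RF (locally a) -> a < c -> RF (fun s => f s < c).
Proof.
  intros H Hc. rewrite lim_R_iff in H. 2: apply at_right_filter.
  specialize (H (c - a) ltac:(lra)). eapply filter_imp; [|exact H].
  intros s Hs. apply Rabs_lt_between in Hs. lra.
Qed.

Lemma ev_small : RF (fun s => 0 < s < 1).
Proof. apply (right_small _ 1). lra. intros; lra. Qed.

Lemma C_lim x y a1 a2 D : 0 < y -> (1 <= D)%Z ->
  filterlim (fun s => s * LimR (fun N => S2 N (FX s x y a1 a2 D))) RF (locally (PI / (IZR D * IZR D * y))).
Proof.
  intros Hy HD. assert (HDr : 1 <= IZR D) by (apply IZR_le; lia).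
  set (d := IZR D) in *. set (V := PI / (d * d * y)).
  assert (HPI : 2 < PI) by (pose proof PI2_1; lra).
  assert (HV : 0 < V) by (unfold V; apply Rdiv_lt_0_compat; [lra | apply Rmult_lt_0_compat; nra]).
  apply lim_R_iff. apply at_right_filter. intros eps Heps.
  assert (HUc : filterlim (fun s => Uc s y d) RF (locally V)).
  { unfold Uc. apply (lim_eq _ (PI / d * Rpower y (-1) * (/ d + 2 * 0) + 8 * 0 * Rpower y 0 / (y * y))).
    { rewrite Rpow_m1 by lra. rewrite Rpower_O by lra. unfold V. field. lra. }
    apply rp. apply rm. apply rm. apply rc. apply (lim_Rp y (-1) (-2)). intros; f_equal; ring.
    apply rp. apply rc. apply rm. apply rc. apply rid.
    apply rm. apply rm. apply rm. apply rc. apply rid. apply (lim_Rp y 0 (-2)). intros; f_equal; ring. apply rc. }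
  assert (E1 := ev_gt _ _ (V + eps) HUc ltac:(lra)).
  set (R := 4 + 12 / (d * d * y * eps)).
  assert (HR0 : 0 <= 12 / (d * d * y * eps)) by (apply Rlt_le, Rdiv_lt_0_compat; [lra | repeat apply Rmult_lt_0_compat; lra]).
  assert (HR : 4 <= R) by (unfold R; lra).
  set (c0 := 1 + 2 * d / (R * y)).
  assert (Hc0p : 0 <= 2 * d / (R * y)) by (apply Rlt_le, Rdiv_lt_0_compat; nra).
  assert (Hc0 : 1 <= c0) by (unfold c0; lra).
  assert (HRc : 2 * d <= R * y * c0).
  { unfold c0. replace (R * y * (1 + 2 * d / (R * y))) with (R * y + 2 * d) by (field; nra). nra. }
  assert (HLam : filterlim (fun s => Lam s R d) RF (locally (PI / d - 4 / (d * R)))).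
  { unfold Lam. apply (lim_eq _ (Rpower (1 + R * R) 0 * PI / d - 4 / (d * R))).
    { rewrite Rpower_O by nra. field. nra. }
    apply rmi. apply rm. apply rm. apply (lim_Rp (1 + R * R) 0 (-1)). intros; f_equal; ring. apply rc. apply rc. apply rc. }
  assert (HLpos : 0 < PI / d - 4 / (d * R)).
  { replace (PI / d - 4 / (d * R)) with ((PI - 4 / R) / d) by (field; nra). apply Rdiv_lt_0_compat; [|lra].
    assert (4 / R <= 1). { apply (Rmult_le_reg_r R). lra. replace (4 / R * R) with 4 by (field; lra). lra. } lra. }
  assert (E3 := ev_lt _ _ 0 HLam HLpos).
  set (Lc := fun s => Lam s R d * Rpower y (-1 - 2 * s) * Rpower (c0 + d) (- 2 * s) / d - 8 * s * Rpower y (- 2 * s) / (y * y)).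
  assert (HLc : filterlim Lc RF (locally ((PI / d - 4 / (d * R)) * Rpower y (-1) * Rpower (c0 + d) 0 / d - 8 * 0 * Rpower y 0 / (y * y)))).
  { unfold Lc. apply rmi. apply rm. apply rm. apply rm. exact HLam. apply (lim_Rp y (-1) (-2)). intros; f_equal; ring.
    apply (lim_Rp (c0 + d) 0 (-2)). intros; f_equal; ring. apply rc.
    apply rm. apply rm. apply rm. apply rc. apply rid. apply (lim_Rp y 0 (-2)). intros; f_equal; ring. apply rc. }
  assert (HLc0 : V - eps / 2 < (PI / d - 4 / (d * R)) * Rpower y (-1) * Rpower (c0 + d) 0 / d - 8 * 0 * Rpower y 0 / (y * y)).
  { rewrite Rpow_m1 by lra. rewrite !Rpower_O by lra.
    replace ((PI / d - 4 / (d * R)) * / y * 1 / d - 8 * 0 * 1 / (y * y)) with (V - 4 / (d * d * R * y)) by (unfold V; field; nra).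
    assert (4 / (d * d * R * y) < eps / 2).
    { apply (Rmult_lt_reg_r (d * d * R * y)). repeat apply Rmult_lt_0_compat; lra.
      replace (4 / (d * d * R * y) * (d * d * R * y)) with 4 by (field; nra).
      unfold R. replace (eps / 2 * (d * d * (4 + 12 / (d * d * y * eps)) * y)) with (2 * eps * d * d * y + 6) by (field; nra).
      assert (0 < eps * d * d * y) by (repeat apply Rmult_lt_0_compat; lra). lra. }
    lra. }
  assert (E2 := ev_lt _ _ _ HLc HLc0).
  eapply filter_imp. 2:{ apply filter_and. exact E1. apply filter_and. exact E2. apply filter_and. exact E3. exact ev_small. }
  intros s [H1 [H2 [H3 H4]]].
  assert (HL3 : 0 <= Lam s R d) by lra.
  assert (Hs0 : 0 < s) by lra. assert (HR1 : 1 <= R) by lra.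
  assert (Hlo := FX_lim_lo s x y a1 a2 D R c0 Hs0 Hy HD HR1 Hc0 HRc HL3).
  fold d in Hlo.
  assert (Hup : s * LimR (fun N => S2 N (FX s x y a1 a2 D)) <= Uc s y d).
  { assert (Hl := FX_lim_ex s x y a1 a2 D ltac:(lra) Hy HD).
    apply (lim_le_R (fun N => s * S2 N (FX s x y a1 a2 D)) (fun _ => Uc s y d)).
    - intros N. apply FX_S2_up; [exact Hs0 | exact Hy | exact HD].
    - apply (is_lim_seq_scal_l _ s _ Hl).
    - apply is_lim_seq_const. }
  apply Rabs_lt_between. unfold Lc in H2. split; lra.
Qed.

Lemma lim_C {T} (F : (T -> Prop) -> Prop) {FF : Filter F} (f : T -> C) (a b : R) :
  filterlim (fun s => fst (f s)) F (locally a) -> filterlim (fun s => snd (f s)) F (locally b) ->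
  filterlim f F (locally (a, b)).
Proof.
  intros H1 H2. apply filterlim_locally. intros eps.
  rewrite filterlim_locally in H1, H2. specialize (H1 eps). specialize (H2 eps).
  eapply filter_imp; [|apply filter_and; [exact H1 | exact H2]].
  intros s [Hs1 Hs2]. split; auto.
Qed.

Definition LA1 s x y a1 a2 D := LimR (fun N => S2 N (FA1 s x y a1 a2 D)).
Definition LA2 s x y a1 a2 D := LimR (fun N => S2 N (FA2 s x y a1 a2 D)).
Definition LX s x y a1 a2 D := LimR (fun N => S2 N (FX s x y a1 a2 D)).

Lemma LA1_lim s x y a1 a2 D : 0 <= s <= 1 -> 0 < y -> (1 <= D)%Z ->
  is_lim_seq (fun N => S2 N (FA1 s x y a1 a2 D)) (LA1 s x y a1 a2 D).
Proof.
  intros Hs Hy HD. destruct (S2_dom (FA1 s x y a1 a2 D) (Fb x y a1 a2 D) (Bb y (IZR D))) as [_ [H _]].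
  intros; apply FA1_dom; auto. intros; apply Fb_sum; auto. apply fin_lim; auto.
Qed.

Lemma LA2_lim s x y a1 a2 D : 0 <= s <= 1 -> 0 < y -> (1 <= D)%Z ->
  is_lim_seq (fun N => S2 N (FA2 s x y a1 a2 D)) (LA2 s x y a1 a2 D).
Proof.
  intros Hs Hy HD. destruct (S2_dom (FA2 s x y a1 a2 D) (Fb x y a1 a2 D) (Bb y (IZR D))) as [_ [H _]].
  intros; apply FA2_dom; auto. intros; apply Fb_sum; auto. apply fin_lim; auto.
Qed.

Lemma Re_sigma_eps s x y a1 a2 D : 0 < s < 1 -> 0 < y -> (1 <= D)%Z ->
  fst (sigma_eps s (x, y) a1 a2 D) = / (1 + s) * LA1 s x y a1 a2 D - / (1 + s) * (s * LX s x y a1 a2 D).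
Proof.
  intros Hs Hy HD. change (fst (sigma_eps s (x, y) a1 a2 D)) with (LimR (fun N => Re (sigma_partial s (x, y) a1 a2 D N))).
  apply LimR_unique.
  apply (is_lim_seq_ext (fun N => / (1 + s) * (S2 N (FA1 s x y a1 a2 D) + S2 N (FT1 s x y a1 a2 D)) - s / (1 + s) * S2 N (FX s x y a1 a2 D))).
  { intros N. rewrite Re_partial. symmetry.
    rewrite (S2_ext N _ (fun m n => / (1 + s) * (FA1 s x y a1 a2 D m n + FT1 s x y a1 a2 D m n) - s / (1 + s) * FX s x y a1 a2 D m n)).
    2:{ intros. apply Re_term; lra. }
    rewrite S2_minus, S2_scal, S2_scal, S2_plus. reflexivity. }
  replace (/ (1 + s) * LA1 s x y a1 a2 D - / (1 + s) * (s * LX s x y a1 a2 D))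
    with (/ (1 + s) * (LA1 s x y a1 a2 D + 0) - s / (1 + s) * LX s x y a1 a2 D) by (field; lra).
  apply is_lim_seq_minus'. apply (is_lim_seq_scal_l _ (/ (1 + s)) (LA1 s x y a1 a2 D + 0)).
  apply is_lim_seq_plus'. apply LA1_lim; auto; lra.
  apply (FTg_lim G1 s x y a1 a2 D); try lra; auto. intros; apply G1_abs; auto.
  apply (is_lim_seq_scal_l _ (s / (1 + s)) (LX s x y a1 a2 D)). apply FX_lim_ex; auto; lra.
Qed.

Lemma Im_sigma_eps s x y a1 a2 D : 0 < s < 1 -> 0 < y -> (1 <= D)%Z ->
  snd (sigma_eps s (x, y) a1 a2 D) = / (1 + s) * LA2 s x y a1 a2 D.
Proof.
  intros Hs Hy HD. change (snd (sigma_eps s (x, y) a1 a2 D)) with (LimR (fun N => Im (sigma_partial s (x, y) a1 a2 D N))).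
  apply LimR_unique.
  apply (is_lim_seq_ext (fun N => / (1 + s) * (S2 N (FA2 s x y a1 a2 D) + S2 N (FT2 s x y a1 a2 D)))).
  { intros N. rewrite Im_partial. symmetry.
    rewrite (S2_ext N _ (fun m n => / (1 + s) * (FA2 s x y a1 a2 D m n + FT2 s x y a1 a2 D m n))).
    2:{ intros. apply Im_term; lra. }
    rewrite S2_scal, S2_plus. reflexivity. }
  replace (/ (1 + s) * LA2 s x y a1 a2 D) with (/ (1 + s) * (LA2 s x y a1 a2 D + 0)) by ring.
  apply (is_lim_seq_scal_l _ (/ (1 + s)) (LA2 s x y a1 a2 D + 0)).
  apply is_lim_seq_plus'. apply LA2_lim; auto; lra.
  apply (FTg_lim G2 s x y a1 a2 D); try lra; auto. intros; apply G2_abs; auto.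
Qed.

Lemma lim_inv1 : filterlim (fun s => / (1 + s)) RF (locally 1).
Proof.
  assert (H0 : ex_derive (fun s => / (1 + s)) 0) by (auto_derive; lra).
  assert (H := ex_derive_continuous (K := R_AbsRing) (V := R_NormedModule) _ _ H0).
  intros P HP. specialize (H P). simpl in H. replace (/ (1 + 0)) with 1 in H by (field). specialize (H HP).
  unfold filtermap in *. destruct H as [e He]. exists e. intros u Hu _. apply He. exact Hu.
Qed.

Lemma sigma_lim_pos x y a1 a2 D : 0 < y -> (1 <= D)%Z ->
  filterlim (fun eps => sigma_eps eps (x, y) a1 a2 D) (at_right 0)
    (locally (LA1 0 x y a1 a2 D - PI / (IZR D * IZR D * y), LA2 0 x y a1 a2 D)).
Proof.
  intros Hy HD. apply (lim_C (at_right 0) (FF := at_right_filter 0)).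
  - apply (lim_ext RF (FF := at_right_filter 0) (fun s => / (1 + s) * LA1 s x y a1 a2 D - / (1 + s) * (s * LX s x y a1 a2 D))).
    { eapply filter_imp; [|exact ev_small]. intros s Hs. symmetry. apply Re_sigma_eps; auto. }
    apply (lim_eq _ (1 * LA1 0 x y a1 a2 D - 1 * (PI / (IZR D * IZR D * y)))). ring.
    apply rmi. apply rm. apply lim_inv1. apply FA1_conv; auto. apply rm. apply lim_inv1. apply C_lim; auto.
  - apply (lim_ext RF (FF := at_right_filter 0) (fun s => / (1 + s) * LA2 s x y a1 a2 D)).
    { eapply filter_imp; [|exact ev_small]. intros s Hs. symmetry. apply Im_sigma_eps; auto. }
    apply (lim_eq _ (1 * LA2 0 x y a1 a2 D)). ring.
    apply rm. apply lim_inv1. apply FA2_conv; auto.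
Qed.

Lemma sigma_eps_neg s z a1 a2 D : sigma_eps s z a1 a2 D = sigma_eps s z a1 a2 (- D).
Proof.
  unfold sigma_eps. f_equal.
  - f_equal. apply Lim_seq_ext. intros N. rewrite !Re_partial. rewrite S2_reflect.
    apply S2_ext. intros. rewrite sigma_term_neg. reflexivity.
  - f_equal. apply Lim_seq_ext. intros N. rewrite !Im_partial. rewrite S2_reflect.
    apply S2_ext. intros. rewrite sigma_term_neg. reflexivity.
Qed.

Lemma sigma_eps_abs s z a1 a2 D : sigma_eps s z a1 a2 D = sigma_eps s z a1 a2 (Z.abs D).
Proof.
  destruct (Z_le_dec 0 D).
  - rewrite Z.abs_eq; auto.
  - rewrite Z.abs_neq by lia. apply sigma_eps_neg.
Qed.

Global Instance Im_to_infty_filter : Filter Im_to_infty.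
Proof.
  constructor.
  - exists 0. auto.
  - intros P Q [M1 H1] [M2 H2]. exists (Rmax M1 M2). intros z Hz. split.
    apply H1. eapply Rle_lt_trans. apply Rmax_l. exact Hz.
    apply H2. eapply Rle_lt_trans. apply Rmax_r. exact Hz.
  - intros P Q H [M HM]. exists M. intros z Hz. apply H, HM, Hz.
Qed.

Lemma LA_bound (a : Z -> Z -> R) x y a1 a2 D : 0 < y -> (1 <= D)%Z ->
  (forall m n, Rabs (a m n) <= Fb x y a1 a2 D m n) ->
  Rabs (LimR (fun N => S2 N a)) <= Bb y (IZR D).
Proof.
  intros Hy HD Ha. destruct (S2_dom a (Fb x y a1 a2 D) (Bb y (IZR D)) Ha) as [_ [Hex _]].
  intros; apply Fb_sum; auto.
  assert (Hl := fin_lim _ Hex).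
  apply (lim_le_R (fun N => Rabs (S2 N a)) (fun _ => Bb y (IZR D))).
  - intros N. eapply Rle_trans. apply S2_abs. eapply Rle_trans. apply S2_le. apply Ha. apply Fb_sum; auto.
  - apply (is_lim_seq_abs _ (LimR (fun N => S2 N a))). exact Hl.
  - apply is_lim_seq_const.
Qed.

Lemma Bb_small d : 1 <= d -> exists K, 0 < K /\ forall y, 1 <= y -> Bb y d <= K / y.
Proof.
  intros Hd. exists (4 * (112 * d * 2 * (1 + d * d)) * (PI + 2)). split.
  { assert (0 < PI) by apply PI_RGT_0. apply Rmult_lt_0_compat; [|lra]. nra. }
  intros y Hy. unfold Bb, KA.
  assert (HPI : 0 < PI) by apply PI_RGT_0.
  assert (Hiy : / (y * y) <= 1) by (rewrite <- Rinv_1; apply Rinv_le_contravar; nra).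
  assert (Hiy0 : 0 < / (y * y)) by (apply Rinv_0_lt_compat; nra).
  assert (HK1 : 112 * d * (1 + / (y * y)) * (y * y + d * d) / (y * y) <= 112 * d * 2 * (1 + d * d)).
  { replace (112 * d * (1 + / (y * y)) * (y * y + d * d) / (y * y)) with (112 * d * (1 + / (y * y)) * (1 + d * d * / (y * y))) by (field; nra).
    assert (d * d * / (y * y) <= d * d) by (rewrite <- (Rmult_1_r (d * d)) at 2; apply Rmult_le_compat_l; nra).
    apply Rmult_le_compat. nra. nra. nra. lra. }
  assert (HK0 : 0 <= 112 * d * (1 + / (y * y)) * (y * y + d * d) / (y * y)).
  { apply Rmult_le_pos. apply Rmult_le_pos. nra. nra. lra. }
  assert (Hp : PI / d + 2 / y <= PI + 2).
  { assert (PI / d <= PI). { apply (Rmult_le_reg_r d). lra. replace (PI / d * d) with PI by (field; lra). nra. }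
    assert (2 / y <= 2). { apply (Rmult_le_reg_r y). lra. replace (2 / y * y) with 2 by (field; lra). nra. } lra. }
  assert (Hp0 : 0 <= PI / d + 2 / y). { apply Rplus_le_le_0_compat; apply Rlt_le, Rdiv_lt_0_compat; lra. }
  apply (Rle_trans _ (4 * (112 * d * 2 * (1 + d * d)) * (PI + 2) / (y * y))).
  - unfold Rdiv. apply Rmult_le_compat_r. lra. apply Rmult_le_compat; try nra.
  - unfold Rdiv. apply Rmult_le_compat_l. apply Rlt_le. apply Rmult_lt_0_compat; [|lra]. nra.
    apply Rinv_le_contravar; nra.
Qed.

Theorem lemma1p7 (a1 a2 D : Z) (hD : D <> 0%Z) :
  exists L : C -> C,
    (forall z : C, 0 < Im z ->
       filterlim (fun eps => sigma_eps eps z a1 a2 D) (at_right 0) (locally (L z))) /\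
    filterlim L Im_to_infty (locally (RtoC 0)).
Proof.
  set (Dp := Z.abs D). assert (HDp : (1 <= Dp)%Z) by (unfold Dp; lia).
  assert (HDr : 1 <= IZR Dp) by (apply IZR_le; lia).
  exists (fun z => (LA1 0 (fst z) (snd z) a1 a2 Dp - PI / (IZR Dp * IZR Dp * snd z), LA2 0 (fst z) (snd z) a1 a2 Dp)).
  split.
  - intros [x y] Hy. unfold Im in Hy. simpl in Hy. simpl fst; simpl snd.
    eapply filterlim_ext. 2: apply sigma_lim_pos; auto.
    intros s. simpl. symmetry. apply sigma_eps_abs.
  - unfold RtoC. apply (lim_C Im_to_infty (FF := Im_to_infty_filter)).
    + apply lim_R_iff. apply Im_to_infty_filter. intros eps Heps.
      destruct (Bb_small (IZR Dp) HDr) as [K [HK HKb]].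
      assert (HPI : 0 < PI) by apply PI_RGT_0.
      exists (1 + 2 * (K + PI) / eps). intros [x y] Hz. unfold Im in Hz. simpl in Hz. simpl fst; simpl snd.
      assert (H2 : 0 <= 2 * (K + PI) / eps) by (apply Rlt_le, Rdiv_lt_0_compat; lra).
      assert (Hy : 1 <= y) by lra.
      assert (HB := LA_bound (FA1 0 x y a1 a2 Dp) x y a1 a2 Dp ltac:(lra) HDp (fun m n => FA1_dom 0 x y a1 a2 Dp m n ltac:(lra) ltac:(lra) HDp)).
      fold (LA1 0 x y a1 a2 Dp) in HB.
      specialize (HKb y Hy).
      assert (HP : 0 <= PI / (IZR Dp * IZR Dp * y) <= PI / y).
      { assert (Hdd : 1 <= IZR Dp * IZR Dp) by nra.
        assert (y <= IZR Dp * IZR Dp * y) by nra.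
        split. apply Rlt_le, Rdiv_lt_0_compat; [lra|]. lra.
        unfold Rdiv. apply Rmult_le_compat_l. lra. apply Rinv_le_contravar; lra. }
      assert (Hfin : (K + PI) / y < eps).
      { apply (Rmult_lt_reg_r y). lra. replace ((K + PI) / y * y) with (K + PI) by (field; lra).
        assert (2 * (K + PI) / eps < y) by lra.
        apply (Rmult_lt_compat_l eps) in H; [|lra]. replace (eps * (2 * (K + PI) / eps)) with (2 * (K + PI)) in H by (field; lra).
        lra. }
      replace ((K + PI) / y) with (K / y + PI / y) in Hfin by (field; lra).
      rewrite Rminus_0_r. eapply Rle_lt_trans. apply Rabs_triang. rewrite Rabs_Ropp.
      rewrite (Rabs_right (PI / (IZR Dp * IZR Dp * y))) by lra. lra.
    + apply lim_R_iff. apply Im_to_infty_filter. intros eps Heps.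
      destruct (Bb_small (IZR Dp) HDr) as [K [HK HKb]].
      exists (1 + 2 * K / eps). intros [x y] Hz. unfold Im in Hz. simpl in Hz. simpl fst; simpl snd.
      assert (H2 : 0 <= 2 * K / eps) by (apply Rlt_le, Rdiv_lt_0_compat; lra).
      assert (Hy : 1 <= y) by lra.
      assert (HB := LA_bound (FA2 0 x y a1 a2 Dp) x y a1 a2 Dp ltac:(lra) HDp (fun m n => FA2_dom 0 x y a1 a2 Dp m n ltac:(lra) ltac:(lra) HDp)).
      fold (LA2 0 x y a1 a2 Dp) in HB.
      specialize (HKb y Hy).
      assert (Hfin : K / y < eps).
      { apply (Rmult_lt_reg_r y). lra. replace (K / y * y) with K by (field; lra).
        assert (2 * K / eps < y) by lra.
        apply (Rmult_lt_compat_l eps) in H; [|lra]. replace (eps * (2 * K / eps)) with (2 * K) in H by (field; lra).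
        lra. }
      rewrite Rminus_0_r. lra.
Qed.
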